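(* Let $M\in\mathbb{N}^*$, $\mathcal{L}_M=\{0,\dots,M\}$, $x_0\in\mathcal{L}_M$, $y_0\in\mathbb{N}$. Let $\lambda:\mathbb{R}_+\times\mathcal{L}_M\to\mathbb{R}_+$ be such that $t\mapsto\lambda(t,x)$ is càdlàg for every $x$, $\lambda(t,M)=0$ for all $t$, and $\lambda$ is bounded on $[0,T]\times\mathcal{L}_M$ for every $T>0$. Let $f:\mathbb{R}\to\mathbb{R}$ be continuous with $0<\underline{f}\le f\le\bar f<\infty$. Let $(\mu^k_{ij})_{i,j\ge0}$, $k\in\mathcal{L}_M$, satisfy $\mu^k_{ij}\ge0$ for $i\ne j$, $\mu^k_{ii}\le0$, $\sum_{j\ge0}\mu^k_{ij}=0$, and $\sup_i|\mu^k_{ii}|<\infty$ for each $k$. Then the equation $P'(t)=\Psi(t,(P(t))_+)$, $P(0)=P_0$, admits a unique solution on $\mathbb{R}_+$ (with values in the summable families), and this solution satisfies $P(t)\ge0$ componentwise and $|P(t)|=1$ for all $t\ge0$.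
   Context: Let $E$ be the set of real families $u=(u^i_j)_{0\le i\le M,\,j\ge0}$, $E_+$ the subset with all entries $\ge0$, $E_+^*$ the subset with all entries $>0$, and $|u|=\sum_{i=0}^M\sum_{j\ge0}|u^i_j|$. For $x\in E$, $(x)_+$ denotes the componentwise positive part. $P_0$ is given by $(P_0)^{x_0}_{y_0}=1$ and all other entries $0$. For $x\in E_+$ set $\varphi(x,i)=\frac{\sum_{l\ge0}f(l)x^i_l}{\sum_{l\ge0}x^i_l}$ and $$(\Psi(t,x))^i_j=\sum_{k\ge0}\mu^i_{kj}x^i_k+\mathbf{1}_{\{i\ge1\}}\frac{\lambda(t,i-1)}{\varphi(x,i-1)}f(j)x^{i-1}_j-\mathbf{1}_{\{i\le M-1\}}\frac{\lambda(t,i)}{\varphi(x,i)}f(j)x^i_j,$$ with the convention that $\frac{x^i_j}{\varphi(x,i)}=0$ when $x^i_l=0$ for all $l$ (continuous extension from $E_+^*$). *)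

(* Defs.v *)
From Stdlib Require Import Reals Lra Arith.
From Coquelicot Require Import Coquelicot.
Open Scope R_scope.

(* A rfamily u = (u^i_j)_{0<=i<=M, j>=0} is represented by u : nat -> nat -> R;
   only the entries with i <= M are meaningful. *)
Definition rfamily := nat -> nat -> R.

Definition summable (M : nat) (u : rfamily) : Prop :=
  forall i, (i <= M)%nat -> ex_series (fun j => Rabs (u i j)).

Definition l1norm (M : nat) (u : rfamily) : R :=
  sum_f_R0 (fun i => Series (fun j => Rabs (u i j))) M.

Definition pos (u : rfamily) : rfamily := fun i j => Rmax (u i j) 0.

Definition P0 (x0 y0 : nat) : rfamily :=
  fun i j => if (Nat.eqb i x0 && Nat.eqb j y0)%bool then 1 else 0.

Definition phi (f : R -> R) (x : rfamily) (i : nat) : R :=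
  Series (fun l => f (INR l) * x i l) / Series (x i).

(* x^i_j / phi(x,i), with the convention that it is 0 when the row x^i is
   identically zero (for x >= 0 summable: iff sum_l x^i_l = 0). *)
Definition frac (f : R -> R) (x : rfamily) (i j : nat) : R :=
  if Req_EM_T (Series (x i)) 0 then 0 else x i j / phi f x i.

Definition Psi (M : nat) (lam : R -> nat -> R) (f : R -> R)
  (mu : nat -> nat -> nat -> R) (t : R) (x : rfamily) : rfamily :=
  fun i j =>
    Series (fun k => mu i k j * x i k)
    + (if (1 <=? i)%nat then lam t (i - 1)%nat * f (INR j) * frac f x (i - 1)%nat j else 0)
    - (if (i <=? M - 1)%nat then lam t i * f (INR j) * frac f x i j else 0).

(* P is a solution on R_+ of P' = Psi(t,(P)_+), P(0) = P_0, with values in the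
   summable families: P(t) summable, t |-> P(t) continuous for |.|, and
   P(t) = P_0 + int_0^t Psi(s,(P(s))_+) ds (integral form, componentwise). *)
Definition is_solution (M x0 y0 : nat) (lam : R -> nat -> R) (f : R -> R)
  (mu : nat -> nat -> nat -> R) (P : R -> rfamily) : Prop :=
  (forall t, 0 <= t -> summable M (P t)) /\
  (forall t, 0 <= t ->
     filterlim (fun s => l1norm M (fun i j => P s i j - P t i j))
       (within (fun s => 0 <= s) (locally t)) (locally 0)) /\
  (forall t, 0 <= t -> forall i j, (i <= M)%nat ->
     is_RInt (fun s => Psi M lam f mu s (pos (P s)) i j) 0 t
             (P t i j - P0 x0 y0 i j)).

(* Main.v *)
Require Import Defs.
From Stdlib Require Import Reals Lra Lia Classical.
From Coquelicot Require Import Coquelicot.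
Open Scope R_scope.
Notation ppos := Defs.pos.

Lemma exs_plus (a b : nat -> R) : ex_series a -> ex_series b -> ex_series (fun n => a n + b n).
Proof. intros H H0; exact (ex_series_plus _ _ H H0). Qed.
Lemma exs_scal (a : nat -> R) c : ex_series a -> ex_series (fun n => c * a n).
Proof. intros H; exact (ex_series_scal_l _ _ H). Qed.
Lemma exs_opp (a : nat -> R) : ex_series a -> ex_series (fun n => - a n).
Proof. intros H. apply (ex_series_ext (fun n => -1 * a n) (fun n => - a n)).
  - intro n. change (-1 * a n = - a n). ring.
  - now apply exs_scal. Qed.
Lemma exs_minus (a b : nat -> R) : ex_series a -> ex_series b -> ex_series (fun n => a n - b n).
Proof. intros H H0. apply exs_plus; auto. now apply exs_opp. Qed.
Lemma exs_le (a b : nat -> R) : (forall n, Rabs (a n) <= b n) -> ex_series b -> ex_series a.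
Proof. intros H H0. apply (ex_series_le a b); auto. Qed.
Lemma exs_abs (a : nat -> R) : ex_series (fun n => Rabs (a n)) -> ex_series a.
Proof. apply ex_series_Rabs. Qed.

Lemma ser_zero : Series (fun _ => 0) = 0.
Proof. transitivity (Series (fun n : nat => 0 * 0)). apply Series_ext; intro; ring.
  rewrite Series_scal_l; ring. Qed.

Lemma ser_ge0 (a : nat -> R) : (forall n, 0 <= a n) -> ex_series a -> 0 <= Series a.
Proof. intros H H0. rewrite <- ser_zero. apply Series_le; auto. intro n; split; [lra|auto]. Qed.

Lemma ser_lim (a : nat -> R) : ex_series a -> is_lim_seq (sum_f_R0 a) (Series a).
Proof.
  intros H. apply Series_correct in H. apply is_series_Reals in H.
  apply is_lim_seq_Reals. exact H.
Qed.

Lemma ser_bound (a : nat -> R) (B : R) :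
  (forall n, 0 <= a n) -> (forall N, sum_f_R0 a N <= B) ->
  ex_series a /\ Series a <= B.
Proof.
  intros Ha Hb.
  assert (Hg : Un_growing (sum_f_R0 a)).
  { intro n; simpl; specialize (Ha (S n)); lra. }
  assert (Hu : has_ub (sum_f_R0 a)).
  { exists B; intros x [n ->]; apply Hb. }
  destruct (growing_cv _ Hg Hu) as [l Hl].
  assert (Hs : is_series a l) by (apply is_series_Reals; exact Hl).
  split. exists l; exact Hs.
  rewrite (is_series_unique _ _ Hs).
  apply is_lim_seq_Reals in Hl.
  assert (H := is_lim_seq_le _ (fun _ => B) l B Hb Hl (is_lim_seq_const B)). simpl in H. exact H.
Qed.

Lemma ser_partial_le (a : nat -> R) N :
  (forall n, 0 <= a n) -> ex_series a -> sum_f_R0 a N <= Series a.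
Proof.
  intros Ha He.
  assert (Hm : forall n, sum_f_R0 a N <= sum_f_R0 a (n + N)).
  { induction n. simpl; lra.
    replace (S n + N)%nat with (S (n + N)) by lia. simpl. specialize (Ha (S (n+N))). lra. }
  assert (H := is_lim_seq_le (fun _ => sum_f_R0 a N) (fun n => sum_f_R0 a (n + N)) _ _
    Hm (is_lim_seq_const _) (proj1 (is_lim_seq_incr_n _ N _) (ser_lim a He))).
  simpl in H. apply H.
Qed.

Lemma sum_nonneg (a : nat -> R) N : (forall n, (n <= N)%nat -> 0 <= a n) -> 0 <= sum_f_R0 a N.
Proof. intros H. induction N; simpl. apply H; lia. assert (0 <= a (S N)) by (apply H; lia).
  assert (0 <= sum_f_R0 a N) by (apply IHN; intros; apply H; lia). lra. Qed.

Lemma sum_scal_l (a : nat -> R) c N : sum_f_R0 (fun j => c * a j) N = c * sum_f_R0 a N.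
Proof. induction N; simpl; [|rewrite IHN]; ring. Qed.
Lemma sum_scal_r (a : nat -> R) c N : sum_f_R0 (fun j => a j * c) N = sum_f_R0 a N * c.
Proof. induction N; simpl; [|rewrite IHN]; ring. Qed.

Lemma sum_minus' (a b : nat -> R) N : sum_f_R0 (fun j => a j - b j) N = sum_f_R0 a N - sum_f_R0 b N.
Proof. induction N; simpl; [|rewrite IHN]; ring. Qed.

Lemma sum_mono (a : nat -> R) N N' : (forall n, 0 <= a n) -> (N <= N')%nat ->
  sum_f_R0 a N <= sum_f_R0 a N'.
Proof. intros H Hle. induction Hle. lra. simpl. specialize (H (S m)). lra. Qed.

Lemma sum_ge_term (a : nat -> R) N i : (forall n, (n <= N)%nat -> 0 <= a n) -> (i <= N)%nat ->
  a i <= sum_f_R0 a N.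
Proof. intros H Hi. induction N; simpl.
  - replace i with 0%nat by lia. lra.
  - destruct (Nat.eq_dec i (S N)) as [->|Hne].
    + assert (0 <= sum_f_R0 a N) by (apply sum_nonneg; intros; apply H; lia). lra.
    + assert (a i <= sum_f_R0 a N) by (apply IHN; [intros; apply H; lia| lia]).
      assert (0 <= a (S N)) by (apply H; lia). lra.
Qed.

Lemma sum_swap (a : nat -> nat -> R) M J :
  sum_f_R0 (fun j => sum_f_R0 (fun i => a i j) M) J = sum_f_R0 (fun i => sum_f_R0 (fun j => a i j) J) M.
Proof.
  induction J; simpl. reflexivity.
  rewrite IHJ. rewrite <- sum_plus. reflexivity.
Qed.

Lemma ser_sum (a : nat -> nat -> R) M : (forall i, (i <= M)%nat -> ex_series (a i)) ->
  ex_series (fun j => sum_f_R0 (fun i => a i j) M) /\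
  Series (fun j => sum_f_R0 (fun i => a i j) M) = sum_f_R0 (fun i => Series (a i)) M.
Proof.
  intros H. induction M; simpl.
  - split. apply H; lia. reflexivity.
  - destruct IHM as [H1 H2]. intros; apply H; lia.
    assert (H3 : ex_series (a (S M))) by (apply H; lia).
    split. now apply exs_plus.
    rewrite Series_plus; auto. rewrite H2; reflexivity.
Qed.

Definition nrm (u : nat -> R) := Series (fun j => Rabs (u j)).
Definition sm (u : nat -> R) := ex_series (fun j => Rabs (u j)).

Lemma row_bound (u : nat -> R) B : (forall J, sum_f_R0 (fun j => Rabs (u j)) J <= B) -> sm u /\ nrm u <= B.
Proof. intros H. apply ser_bound; auto. intros; apply Rabs_pos. Qed.

Lemma row_partial (u : nat -> R) J : sm u -> sum_f_R0 (fun j => Rabs (u j)) J <= nrm u.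
Proof. intros H. apply ser_partial_le; auto. intros; apply Rabs_pos. Qed.

Lemma nrm_ge0 u : sm u -> 0 <= nrm u.
Proof. intros H. apply ser_ge0; auto. intros; apply Rabs_pos. Qed.

Lemma abs_le_nrm u j : sm u -> Rabs (u j) <= nrm u.
Proof. intros H. eapply Rle_trans; [|apply (row_partial u j H)].
  apply (sum_ge_term (fun j => Rabs (u j))); auto. intros; apply Rabs_pos. Qed.

Lemma fam_bound M (u : rfamily) B :
  (forall J, sum_f_R0 (fun i => sum_f_R0 (fun j => Rabs (u i j)) J) M <= B) ->
  summable M u /\ l1norm M u <= B.
Proof.
  intros H.
  assert (Hs : summable M u).
  { intros i Hi. apply (row_bound (u i) B). intros J. eapply Rle_trans; [|apply (H J)].
    apply (sum_ge_term (fun i => sum_f_R0 (fun j => Rabs (u i j)) J)); auto.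
    intros; apply sum_nonneg; intros; apply Rabs_pos. }
  split; auto. unfold l1norm.
  destruct (ser_sum (fun i j => Rabs (u i j)) M Hs) as [_ Heq]. rewrite <- Heq.
  apply ser_bound. intros; apply sum_nonneg; intros; apply Rabs_pos.
  intros N. rewrite sum_swap. apply H.
Qed.

Lemma fam_partial M (u : rfamily) J : summable M u ->
  sum_f_R0 (fun i => sum_f_R0 (fun j => Rabs (u i j)) J) M <= l1norm M u.
Proof. intros H. apply sum_Rle. intros i Hi. apply row_partial. apply H; auto. Qed.

Lemma l1_ge0 M u : summable M u -> 0 <= l1norm M u.
Proof. intros H. apply sum_nonneg. intros. apply nrm_ge0. apply H; auto. Qed.

Lemma row_le_l1 M u i : summable M u -> (i <= M)%nat -> nrm (u i) <= l1norm M u.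
Proof. intros H Hi. apply (sum_ge_term (fun i => nrm (u i))); auto. intros; apply nrm_ge0; apply H; auto. Qed.

Lemma l1_triangle M (u v : rfamily) : summable M u -> summable M v ->
  summable M (fun i j => u i j + v i j) /\ l1norm M (fun i j => u i j + v i j) <= l1norm M u + l1norm M v.
Proof.
  intros Hu Hv. apply fam_bound. intros J.
  eapply Rle_trans; [|apply Rplus_le_compat; [apply (fam_partial M u J Hu)|apply (fam_partial M v J Hv)]].
  rewrite <- sum_plus. apply sum_Rle; intros. rewrite <- sum_plus. apply sum_Rle; intros.
  apply Rabs_triang.
Qed.

Lemma nrm_ext u v : (forall j, u j = v j) -> nrm u = nrm v.
Proof. intros H. unfold nrm. apply Series_ext. intro; now rewrite H. Qed.
Lemma sm_ext u v : (forall j, u j = v j) -> sm u -> sm v.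
Proof. intros H. unfold sm. apply ex_series_ext. intro; now rewrite H. Qed.
Lemma l1_ext M (u v : rfamily) : (forall i j, u i j = v i j) -> l1norm M u = l1norm M v.
Proof. intros H. unfold l1norm. apply sum_eq. intros; now apply nrm_ext. Qed.
Lemma summable_ext M (u v : rfamily) : (forall i j, u i j = v i j) -> summable M u -> summable M v.
Proof. intros H Hu i Hi. apply (sm_ext (u i)). intro; apply H. apply Hu; auto. Qed.

Lemma sm_zero : sm (fun _ => 0).
Proof. apply (row_bound _ 0). intro J. rewrite sum_cte, Rabs_R0; lra. Qed.
Lemma nrm_zero : nrm (fun _ => 0) = 0.
Proof. apply Rle_antisym. apply (row_bound _ 0). intro J. rewrite sum_cte, Rabs_R0; lra.
  apply nrm_ge0, sm_zero. Qed.
Lemma summable_zero M : summable M (fun _ _ => 0).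
Proof. intros i _. apply sm_zero. Qed.

Lemma sm_minus u v : sm u -> sm v -> sm (fun j => u j - v j).
Proof. intros Hu Hv. apply (exs_le _ (fun j => Rabs (u j) + Rabs (v j))). intro j. rewrite Rabs_Rabsolu.
  unfold Rminus; eapply Rle_trans; [apply Rabs_triang|rewrite Rabs_Ropp; lra].
  apply exs_plus; auto. Qed.
Lemma summable_minus M (u v : rfamily) : summable M u -> summable M v -> summable M (fun i j => u i j - v i j).
Proof. intros Hu Hv i Hi. apply sm_minus; [apply Hu|apply Hv]; auto. Qed.

Lemma pos_nonneg (y : rfamily) i j : 0 <= ppos y i j.
Proof. unfold Defs.pos. apply Rmax_r. Qed.
Lemma pos_lip (y z : rfamily) i j : Rabs (ppos y i j - ppos z i j) <= Rabs (y i j - z i j).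
Proof. unfold Defs.pos, Rmax. repeat destruct Rle_dec; unfold Rabs; repeat destruct Rcase_abs; lra. Qed.
Lemma pos_sm (y : rfamily) i : sm (y i) -> sm (ppos y i).
Proof. intros H. apply (exs_le _ (fun j => Rabs (y i j))); auto. intro j. rewrite Rabs_Rabsolu.
  unfold Defs.pos, Rmax. destruct Rle_dec; unfold Rabs; repeat destruct Rcase_abs; lra. Qed.
Lemma pos_nrm (y z : rfamily) i : sm (y i) -> sm (z i) ->
  sm (fun j => ppos y i j - ppos z i j) /\ nrm (fun j => ppos y i j - ppos z i j) <= nrm (fun j => y i j - z i j).
Proof. intros Hy Hz. split. apply sm_minus; apply pos_sm; auto.
  unfold nrm. apply Series_le. intro; split. apply Rabs_pos. apply pos_lip. apply sm_minus; auto. Qed.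


Lemma exR_plus (f g : R -> R) a b : ex_RInt f a b -> ex_RInt g a b -> ex_RInt (fun s => f s + g s) a b.
Proof. intros. exact (ex_RInt_plus f g a b H H0). Qed.
Lemma R_plus (f g : R -> R) a b : ex_RInt f a b -> ex_RInt g a b -> RInt (fun s => f s + g s) a b = RInt f a b + RInt g a b.
Proof. intros. exact (RInt_plus f g a b H H0). Qed.
Lemma exR_minus (f g : R -> R) a b : ex_RInt f a b -> ex_RInt g a b -> ex_RInt (fun s => f s - g s) a b.
Proof. intros. exact (ex_RInt_minus f g a b H H0). Qed.
Lemma R_minus (f g : R -> R) a b : ex_RInt f a b -> ex_RInt g a b -> RInt (fun s => f s - g s) a b = RInt f a b - RInt g a b.
Proof. intros. exact (RInt_minus f g a b H H0). Qed.
Lemma exR_scal (f : R -> R) a b c : ex_RInt f a b -> ex_RInt (fun s => c * f s) a b.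
Proof. intros. exact (ex_RInt_scal f a b c H). Qed.
Lemma R_scal (f : R -> R) a b c : ex_RInt f a b -> RInt (fun s => c * f s) a b = c * RInt f a b.
Proof. intros. exact (RInt_scal f a b c H). Qed.
Lemma exR_abs (f : R -> R) a b : ex_RInt f a b -> ex_RInt (fun s => Rabs (f s)) a b.
Proof. intros. exact (ex_RInt_norm f a b H). Qed.
Lemma R_const (a b c : R) : RInt (fun _ => c) a b = (b - a) * c.
Proof. exact (RInt_const a b c). Qed.
Lemma exR_const (a b c : R) : ex_RInt (fun _ => c) a b.
Proof. apply ex_RInt_const. Qed.

Lemma RInt_sum (F : nat -> R -> R) a b N : (forall n, (n <= N)%nat -> ex_RInt (F n) a b) ->
  ex_RInt (fun s => sum_f_R0 (fun n => F n s) N) a b /\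
  RInt (fun s => sum_f_R0 (fun n => F n s) N) a b = sum_f_R0 (fun n => RInt (F n) a b) N.
Proof.
  intros H. induction N; simpl.
  - split. apply H; lia. reflexivity.
  - destruct IHN as [H1 H2]. intros; apply H; lia.
    assert (H3 : ex_RInt (F (S N)) a b) by (apply H; lia).
    split. apply exR_plus; auto. rewrite R_plus; auto. rewrite H2; reflexivity.
Qed.

Lemma int_l1 M (F : R -> rfamily) (k : R -> R) a b : a <= b ->
  (forall i j, (i <= M)%nat -> ex_RInt (fun s => F s i j) a b) -> ex_RInt k a b ->
  (forall s, a <= s <= b -> summable M (F s) /\ l1norm M (F s) <= k s) ->
  summable M (fun i j => RInt (fun s => F s i j) a b) /\
  l1norm M (fun i j => RInt (fun s => F s i j) a b) <= RInt k a b.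
Proof.
  intros Hab HF Hk HB. apply fam_bound. intros J.
  assert (E : forall i, (i <= M)%nat ->
     ex_RInt (fun s => sum_f_R0 (fun j => Rabs (F s i j)) J) a b /\
     RInt (fun s => sum_f_R0 (fun j => Rabs (F s i j)) J) a b = sum_f_R0 (fun j => RInt (fun s => Rabs (F s i j)) a b) J).
  { intros i Hi. apply (RInt_sum (fun j s => Rabs (F s i j))). intros; apply exR_abs; auto. }
  destruct (RInt_sum (fun i s => sum_f_R0 (fun j => Rabs (F s i j)) J) a b M) as [E1 E2].
  { intros; apply E; auto. }
  apply Rle_trans with (sum_f_R0 (fun i => RInt (fun s => sum_f_R0 (fun j => Rabs (F s i j)) J) a b) M).
  { apply sum_Rle. intros i Hi. rewrite (proj2 (E i Hi)). apply sum_Rle. intros j _.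
    apply abs_RInt_le; auto. }
  rewrite <- E2. apply RInt_le; auto.
  intros s Hs. destruct (HB s) as [B1 B2]. lra. eapply Rle_trans. apply fam_partial; auto. exact B2.
Qed.

Lemma int_exp L c t : 0 < L ->
  is_RInt (fun s => c * exp (2 * L * s)) 0 t (c * (exp (2 * L * t) - 1) / (2 * L)).
Proof.
  intros HL.
  assert (H := is_RInt_derive (fun s => c * exp (2 * L * s) / (2 * L)) (fun s => c * exp (2 * L * s)) 0 t).
  replace (c * (exp (2 * L * t) - 1) / (2 * L)) with
    (minus (c * exp (2 * L * t) / (2 * L)) (c * exp (2 * L * 0) / (2 * L))).
  apply H.
  - intros x _. auto_derive. auto. field. lra.
  - intros x _. apply (ex_derive_continuous (K := R_AbsRing) (V := R_NormedModule)). auto_derive. auto.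
  - unfold minus, plus, opp; simpl. rewrite Rmult_0_r, exp_0. field. lra.
Qed.

Lemma exp_step L c t : 0 < L -> 0 <= c -> 0 <= t ->
  ex_RInt (fun s => L * (c * exp (2 * L * s))) 0 t /\
  RInt (fun s => L * (c * exp (2 * L * s))) 0 t <= c / 2 * exp (2 * L * t).
Proof.
  intros HL Hc Ht. assert (H := int_exp L c t HL).
  assert (Hex : ex_RInt (fun s => c * exp (2 * L * s)) 0 t) by (eexists; exact H).
  split. apply exR_scal; auto.
  rewrite R_scal by auto. rewrite (is_RInt_unique _ _ _ _ H).
  assert (0 < exp (2 * L * t)) by apply exp_pos.
  replace (L * (c * (exp (2 * L * t) - 1) / (2 * L))) with (c / 2 * exp (2 * L * t) - c / 2) by (field; lra).
  lra.
Qed.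

Lemma cont_eps (h : R -> R) c : continuous h c ->
  forall e, 0 < e -> exists d, 0 < d /\ forall u, Rabs (u - c) < d -> Rabs (h u - h c) < e.
Proof.
  intros H e He. apply continuity_pt_filterlim in H.
  destruct (H e He) as [d [Hd Hd']]. exists d. split; auto. intros u Hu.
  destruct (Req_dec u c) as [->|Hne]. rewrite Rminus_diag, Rabs_R0; lra.
  apply (Hd' u). split. split. exact I. auto. exact Hu.
Qed.

Lemma ex_RInt_cont (h : R -> R) a b : (forall s, continuous h s) -> ex_RInt h a b.
Proof. intros H. apply (ex_RInt_continuous (V := R_CompleteNormedModule)). intros; apply H. Qed.

Lemma cont_scal (h : R -> R) c : (forall s, continuous h s) -> forall s, continuous (fun u => c * h u) s.
Proof. intros H s. apply (continuous_mult (K := R_AbsRing) (fun _ => c) h). apply continuous_const. apply H. Qed.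

Lemma glue_int (p1 p2 : R -> R) a x c : a <= x <= c -> ex_RInt p1 a x -> ex_RInt p2 x c ->
  ex_RInt (fun u => if Rle_dec u x then p1 u else p2 u) a c.
Proof.
  intros Hx H1 H2. apply ex_RInt_Chasles with x.
  - eapply ex_RInt_ext; [|exact H1]. intros u Hu. rewrite Rmin_left, Rmax_right in Hu by lra.
    destruct Rle_dec; [reflexivity|lra].
  - eapply ex_RInt_ext; [|exact H2]. intros u Hu. rewrite Rmin_left, Rmax_right in Hu by lra.
    destruct Rle_dec; [lra|reflexivity].
Qed.

Definition rc (g : R -> R) s := forall e, 0 < e -> exists d, 0 < d /\ forall u, s <= u < s + d -> Rabs (g u - g s) < e.
Definition ll (g : R -> R) s l := forall e, 0 < e -> exists d, 0 < d /\ forall u, s - d < u < s -> Rabs (g u - l) < e.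

Definition Ugood (g h : R -> R) a e x := exists p : R -> R, ex_RInt p a x /\ forall u, a <= u <= x -> Rabs (g u * h u - p u) <= e.

Lemma cadlag_approx (g h : R -> R) a b e : a <= b -> 0 < e ->
  (forall s, a <= s <= b -> rc g s) -> (forall s, a < s <= b -> exists l, ll g s l) ->
  (forall s, continuous h s) -> Ugood g h a e b.
Proof.
  intros Hab He Hrc Hll Hh.
  set (E := fun x => a <= x <= b /\ Ugood g h a e x).
  assert (Ea : E a).
  { split. lra. exists (fun u => g u * h u). split. apply ex_RInt_point. intros; rewrite Rminus_diag, Rabs_R0; lra. }
  assert (Hbd : bound E). { exists b. intros x [Hx _]. lra. }
  destruct (completeness E Hbd (ex_intro _ a Ea)) as [c [Hub Hlub]].
  assert (Hac : a <= c) by (apply Hub; exact Ea).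
  assert (Hcb : c <= b). { apply Hlub. intros x [Hx _]. lra. }
  assert (Uc : Ugood g h a e c).
  { destruct (Req_dec c a) as [->|Hca]. exact (proj2 Ea).
    destruct (Hll c) as [l Hl]. lra.
    set (e' := e / (Rabs (h c) + 1)).
    assert (He' : 0 < e') by (unfold e'; apply Rdiv_lt_0_compat; auto; assert (0 <= Rabs (h c)) by apply Rabs_pos; lra).
    destruct (Hl e' He') as [d1 [Hd1 Hd1']].
    destruct (cont_eps h c (Hh c) 1 Rlt_0_1) as [d2 [Hd2 Hd2']].
    set (d := Rmin d1 d2).
    assert (Hd : 0 < d) by (apply Rmin_pos; auto).
    assert (Hex : exists x, E x /\ c - d < x).
    { destruct (Classical_Prop.classic (exists x, E x /\ c - d < x)) as [H|H]; auto.
      exfalso. assert (c <= c - d). apply Hlub. intros y Ey. destruct (Rle_or_lt y (c - d)); auto.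
      exfalso; apply H; exists y; auto. lra. }
    destruct Hex as [x [Ex Hx]].
    assert (Hxc : x <= c) by (apply Hub; exact Ex).
    destruct (Req_dec x c) as [<-|Hxc']. exact (proj2 Ex).
    destruct (proj2 Ex) as [p1 [Hp1 Hp1']].
    exists (fun u => if Rle_dec u x then p1 u else (if Rlt_dec u c then l * h u else g c * h c)).
    split.
    - apply glue_int; auto. destruct Ex; lra.
      apply (ex_RInt_ext (fun u => l * h u)). intros u Hu. rewrite Rmin_left, Rmax_right in Hu by lra.
      destruct Rlt_dec; [reflexivity|lra].
      apply ex_RInt_cont. apply cont_scal; auto.
    - intros u Hu. destruct Rle_dec. apply Hp1'; lra.
      destruct Rlt_dec.
      + replace (g u * h u - l * h u) with ((g u - l) * h u) by ring. rewrite Rabs_mult.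
        assert (A1 : Rabs (g u - l) < e').
        { apply Hd1'. split; try lra. assert (d <= d1) by apply Rmin_l. lra. }
        assert (A2 : Rabs (h u) <= Rabs (h c) + 1).
        { assert (Rabs (h u - h c) < 1). apply Hd2'. assert (d <= d2) by apply Rmin_r.
          rewrite Rabs_left1 by lra. lra.
          assert (Rabs (h u) <= Rabs (h u - h c) + Rabs (h c)).
          { replace (h u) with ((h u - h c) + h c) at 1 by ring. apply Rabs_triang. } lra. }
        apply Rle_trans with (e' * (Rabs (h c) + 1)).
        apply Rmult_le_compat; try apply Rabs_pos; lra.
        unfold e'. right. field. assert (0 <= Rabs (h c)) by apply Rabs_pos; lra.
      + assert (u = c) by lra. subst u. rewrite Rminus_diag, Rabs_R0; lra. }
  destruct (Req_dec c b) as [<-|Hcb'].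
  exact Uc.
  exfalso.
  set (e' := e / (Rabs (h c) + 1)).
  assert (He' : 0 < e') by (unfold e'; apply Rdiv_lt_0_compat; auto; assert (0 <= Rabs (h c)) by apply Rabs_pos; lra).
  destruct (Hrc c (conj Hac Hcb) e' He') as [d3 [Hd3 Hd3']].
  destruct (cont_eps h c (Hh c) 1 Rlt_0_1) as [d4 [Hd4 Hd4']].
  set (x := Rmin (c + Rmin d3 d4 / 2) b).
  assert (Hd34 : 0 < Rmin d3 d4) by (apply Rmin_pos; auto).
  assert (Hx1 : c < x). { unfold x. apply Rmin_glb_lt; lra. }
  assert (Hx2 : x <= b) by apply Rmin_r.
  assert (Hx3 : x <= c + Rmin d3 d4 / 2) by apply Rmin_l.
  assert (Ex : E x).
  { split. lra. destruct Uc as [p1 [Hp1 Hp1']].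
    exists (fun u => if Rle_dec u c then p1 u else g c * h u). split.
    - apply glue_int; auto. lra. apply ex_RInt_cont. apply cont_scal; auto.
    - intros u Hu. destruct Rle_dec. apply Hp1'; lra.
      replace (g u * h u - g c * h u) with ((g u - g c) * h u) by ring. rewrite Rabs_mult.
      assert (A1 : Rabs (g u - g c) < e').
      { apply Hd3'. assert (Rmin d3 d4 <= d3) by apply Rmin_l. lra. }
      assert (A2 : Rabs (h u) <= Rabs (h c) + 1).
      { assert (Rabs (h u - h c) < 1). apply Hd4'. assert (Rmin d3 d4 <= d4) by apply Rmin_r.
        rewrite Rabs_right by lra. lra.
        assert (Rabs (h u) <= Rabs (h u - h c) + Rabs (h c)).
        { replace (h u) with ((h u - h c) + h c) at 1 by ring. apply Rabs_triang. } lra. }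
      apply Rle_trans with (e' * (Rabs (h c) + 1)).
      apply Rmult_le_compat; try apply Rabs_pos; lra.
      unfold e'. right. field. assert (0 <= Rabs (h c)) by apply Rabs_pos; lra. }
  assert (x <= c) by (apply Hub; exact Ex). lra.
Qed.

Lemma cadlag_int (g h : R -> R) a b : a <= b ->
  (forall s, a <= s <= b -> rc g s) -> (forall s, a < s <= b -> exists l, ll g s l) ->
  (forall s, continuous h s) -> ex_RInt (fun s => g s * h s) a b.
Proof.
  intros Hab Hrc Hll Hh.
  set (gh := fun s => g s * h s).
  set (U := {p : R -> R | ex_RInt p a b}).
  set (F := fun P : U -> Prop => exists e, 0 < e /\ forall p : U, (forall u, Rabs (gh u - proj1_sig p u) <= e) -> P p).
  assert (Hgood : forall e, 0 < e -> exists p : U, forall u, Rabs (gh u - proj1_sig p u) <= e).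
  { intros e He. destruct (cadlag_approx g h a b e Hab He Hrc Hll Hh) as [p [Hp Hp']].
    set (q := fun u => if Rle_dec a u then (if Rle_dec u b then p u else gh u) else gh u).
    assert (Hq : ex_RInt q a b).
    { eapply ex_RInt_ext; [|exact Hp]. intros u Hu. rewrite Rmin_left, Rmax_right in Hu by lra.
      unfold q. destruct Rle_dec; [|lra]. destruct Rle_dec; [reflexivity|lra]. }
    exists (exist _ q Hq). intro u. simpl. unfold q.
    destruct Rle_dec; [destruct Rle_dec|].
    apply Hp'; lra. rewrite Rminus_diag, Rabs_R0; lra. rewrite Rminus_diag, Rabs_R0; lra. }
  assert (HF : ProperFilter F).
  { constructor.
    - intros P [e [He HP]]. destruct (Hgood e He) as [p Hp]. exists p. apply HP; auto.
    - constructor.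
      + exists 1. split. lra. intros; exact I.
      + intros P Q [e1 [He1 H1]] [e2 [He2 H2]]. exists (Rmin e1 e2). split. apply Rmin_pos; auto.
        intros p Hp. split. apply H1. intro u. specialize (Hp u). assert (Rmin e1 e2 <= e1) by apply Rmin_l. lra.
        apply H2. intro u. specialize (Hp u). assert (Rmin e1 e2 <= e2) by apply Rmin_r. lra.
      + intros P Q HPQ [e [He HP]]. exists e. split; auto. }
  destruct (filterlim_RInt (V := R_CompleteNormedModule) (fun p : U => proj1_sig p) a b F HF gh (fun p => RInt (proj1_sig p) a b)) as [If [_ HI]].
  - intros p. apply RInt_correct. exact (proj2_sig p).
  - intros P [eps Heps]. exists (eps / 2). split. destruct eps; simpl; lra.
    intros p Hp. apply Heps. intro t. unfold ball; simpl. unfold AbsRing_ball, abs, minus, plus, opp; simpl.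
    specialize (Hp t). replace (proj1_sig p t + - gh t) with (- (gh t - proj1_sig p t)) by ring.
    rewrite Rabs_Ropp. destruct eps; simpl in *; lra.
  - exists If. exact HI.
Qed.

Lemma ballR (x y e : R) : ball x e y <-> Rabs (y - x) < e.
Proof. unfold ball; simpl. unfold AbsRing_ball, abs, minus, plus, opp; simpl. tauto. Qed.

Lemma rc_of (g : R -> R) t : filterlim g (at_right t) (locally (g t)) -> rc g t.
Proof.
  intros H e He. destruct (proj1 (filterlim_locally g (g t)) H (mkposreal e He)) as [d Hd].
  exists d. split. apply cond_pos. intros u Hu.
  destruct (Req_dec u t) as [->|Hne]. rewrite Rminus_diag, Rabs_R0; auto.
  apply ballR. apply Hd. apply ballR. rewrite Rabs_right; lra. lra.
Qed.

Lemma ll_of (g : R -> R) t l : filterlim g (at_left t) (locally l) -> ll g t l.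
Proof.
  intros H e He. destruct (proj1 (filterlim_locally g l) H (mkposreal e He)) as [d Hd].
  exists d. split. apply cond_pos. intros u Hu.
  apply ballR. apply Hd. apply ballR. rewrite Rabs_left; simpl in *; lra. lra.
Qed.

Lemma within_of (h : R -> R) t : (forall e, 0 < e -> exists d, 0 < d /\ forall s, 0 <= s -> Rabs (s - t) < d -> Rabs (h s) < e) ->
  filterlim h (within (fun s => 0 <= s) (locally t)) (locally 0).
Proof.
  intros H. apply filterlim_locally. intro eps. destruct (H eps (cond_pos eps)) as [d [Hd Hd']].
  exists (mkposreal d Hd). intros y Hy Hy0. apply ballR. rewrite Rminus_0_r. apply Hd'. exact Hy0.
  apply ballR in Hy. exact Hy.
Qed.

Lemma of_within (h : R -> R) t : filterlim h (within (fun s => 0 <= s) (locally t)) (locally 0) ->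
  forall e, 0 < e -> exists d, 0 < d /\ forall s, 0 <= s -> Rabs (s - t) < d -> Rabs (h s) < e.
Proof.
  intros H e He. destruct (proj1 (filterlim_locally h 0) H (mkposreal e He)) as [d Hd].
  exists d. split. apply cond_pos. intros s Hs Hst.
  assert (X := Hd s (proj2 (ballR t s d) Hst) Hs). apply ballR in X. replace (h s) with (h s - 0) by ring. exact X.
Qed.

Lemma unif_bound (M : nat) (mu : nat -> nat -> nat -> R) :
  (forall k, (k <= M)%nat -> exists B, forall i, Rabs (mu k i i) <= B) ->
  exists B, forall k i, (k <= M)%nat -> Rabs (mu k i i) <= B.
Proof.
  induction M; intros H.
  - destruct (H 0%nat (Nat.le_refl 0)) as [B HB]. exists B. intros k i Hk. replace k with 0%nat by lia. auto.
  - destruct IHM as [B1 HB1]. intros; apply H; lia.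
    destruct (H (S M) (Nat.le_refl _)) as [B2 HB2]. exists (Rmax B1 B2). intros k i Hk.
    destruct (Nat.eq_dec k (S M)) as [->|Hne]. eapply Rle_trans; [apply HB2|apply Rmax_r].
    eapply Rle_trans; [apply HB1; lia|apply Rmax_l].
Qed.
Section Est.
Variables (M : nat) (lam : R -> nat -> R) (f : R -> R) (mu : nat -> nat -> nat -> R) (flo fup Bmu : R).
Hypothesis Hflo : 0 < flo.
Hypothesis Hf : forall y, flo <= f y <= fup.
Hypothesis Hoff : forall k i j, (k <= M)%nat -> i <> j -> 0 <= mu k i j.
Hypothesis Hdiag : forall k i, (k <= M)%nat -> mu k i i <= 0.
Hypothesis Hrow : forall k i, (k <= M)%nat -> is_series (fun j => mu k i j) 0.
Hypothesis HBmu : forall k i, (k <= M)%nat -> Rabs (mu k i i) <= Bmu.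

Lemma mu_abs_sum k a J : (k <= M)%nat ->
  sum_f_R0 (fun b => Rabs (mu k a b)) J =
  sum_f_R0 (mu k a) J - 2 * (if (a <=? J)%nat then mu k a a else 0).
Proof.
  intros Hk. induction J; simpl.
  - destruct a; simpl.
    + rewrite Rabs_left1 by (apply Hdiag; auto). ring.
    + rewrite Rabs_right by (apply Rle_ge, Hoff; auto). ring.
  - rewrite IHJ.
    destruct (Nat.eq_dec a (S J)) as [->|Hne].
    + rewrite (proj2 (Nat.leb_nle (S J) J)) by lia. rewrite Nat.leb_refl.
      rewrite Rabs_left1 by (apply Hdiag; auto). ring.
    + rewrite Rabs_right by (apply Rle_ge, Hoff; auto).
      destruct (a <=? J)%nat eqn:E.
      * apply Nat.leb_le in E. rewrite (proj2 (Nat.leb_le a (S J))) by lia. ring.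
      * apply Nat.leb_nle in E. rewrite (proj2 (Nat.leb_nle a (S J))) by lia. ring.
Qed.

Lemma mu_partial_nonpos k a J : (k <= M)%nat -> (a <= J)%nat -> sum_f_R0 (mu k a) J <= 0.
Proof.
  intros Hk HaJ.
  assert (Hm : forall n, sum_f_R0 (mu k a) J <= sum_f_R0 (mu k a) (n + J)).
  { induction n. simpl; lra.
    replace (S n + J)%nat with (S (n + J)) by lia. simpl.
    assert (0 <= mu k a (S (n + J))) by (apply Hoff; auto; lia). lra. }
  assert (Hl : is_lim_seq (sum_f_R0 (mu k a)) 0).
  { apply is_lim_seq_Reals. apply is_series_Reals. apply Hrow; auto. }
  assert (H := is_lim_seq_le (fun _ => sum_f_R0 (mu k a) J) (fun n => sum_f_R0 (mu k a) (n + J)) _ _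
    Hm (is_lim_seq_const _) (proj1 (is_lim_seq_incr_n _ J _) Hl)).
  simpl in H. apply H.
Qed.

Lemma mu_row_partial k a J : (k <= M)%nat -> sum_f_R0 (fun b => Rabs (mu k a b)) J <= 2 * Bmu.
Proof.
  intros Hk.
  assert (Hmain : forall J, (a <= J)%nat -> sum_f_R0 (fun b => Rabs (mu k a b)) J <= 2 * Bmu).
  { intros J' HJ. rewrite mu_abs_sum by auto. rewrite (proj2 (Nat.leb_le a J')) by auto.
    assert (H1 := mu_partial_nonpos k a J' Hk HJ). assert (H2 := HBmu k a Hk).
    assert (H3 := Hdiag k a Hk). rewrite Rabs_left1 in H2 by auto. lra. }
  destruct (Compare_dec.le_lt_dec a J) as [HJ|HJ]. now apply Hmain.
  eapply Rle_trans; [|apply (Hmain a); lia].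
  apply sum_mono. intros; apply Rabs_pos. lia.
Qed.

Lemma mu_bound k a b : (k <= M)%nat -> Rabs (mu k a b) <= 2 * Bmu.
Proof. intros Hk. eapply Rle_trans; [|apply (mu_row_partial k a b Hk)].
  apply (sum_ge_term (fun b => Rabs (mu k a b))); auto. intros; apply Rabs_pos. Qed.

Lemma Bmu_ge0 : 0 <= Bmu.
Proof. assert (H := HBmu 0 0 (Nat.le_0_l M)). assert (0 <= Rabs (mu 0%nat 0%nat 0%nat)) by apply Rabs_pos. lra. Qed.

Lemma A_ex i j (w : nat -> R) : (i <= M)%nat -> sm w ->
  ex_series (fun k => Rabs (mu i k j * w k)).
Proof.
  intros Hi Hw. apply (exs_le _ (fun k => 2 * Bmu * Rabs (w k))).
  intro k. rewrite Rabs_Rabsolu, Rabs_mult. apply Rmult_le_compat_r. apply Rabs_pos. apply mu_bound; auto.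
  apply exs_scal. exact Hw.
Qed.

Lemma A_bound i (w : nat -> R) : (i <= M)%nat -> sm w ->
  sm (fun j => Series (fun k => mu i k j * w k)) /\
  nrm (fun j => Series (fun k => mu i k j * w k)) <= 2 * Bmu * nrm w.
Proof.
  intros Hi Hw. apply row_bound. intros J.
  apply Rle_trans with (sum_f_R0 (fun j => Series (fun k => Rabs (mu i k j * w k))) J).
  { apply sum_Rle. intros j _. apply Series_Rabs. apply A_ex; auto. }
  destruct (ser_sum (fun j k => Rabs (mu i k j * w k)) J) as [Hs Heq].
  { intros; apply A_ex; auto. }
  rewrite <- Heq. unfold nrm. rewrite <- Series_scal_l.
  apply Series_le. 2: apply exs_scal; exact Hw.
  intro k. split. apply sum_nonneg; intros; apply Rabs_pos.
  apply Rle_trans with (sum_f_R0 (fun j => Rabs (mu i k j)) J * Rabs (w k)).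
  rewrite (Rmult_comm _ (Rabs (w k))), scal_sum. apply sum_Rle; intros. rewrite Rabs_mult; lra.
  apply Rmult_le_compat_r. apply Rabs_pos. apply mu_row_partial; auto.
Qed.

Lemma A_minus i j (x y : nat -> R) : (i <= M)%nat -> sm x -> sm y ->
  Series (fun k => mu i k j * x k) - Series (fun k => mu i k j * y k) =
  Series (fun k => mu i k j * (x k - y k)).
Proof.
  intros Hi Hx Hy. rewrite <- Series_minus.
  apply Series_ext; intro; ring.
  apply exs_abs, A_ex; auto. apply exs_abs, A_ex; auto.
Qed.


Lemma fup_ge_flo : flo <= fup.
Proof. destruct (Hf 0); lra. Qed.

Lemma ratio_facts S F : 0 <= S -> flo * S <= F -> F <= fup * S ->
  S / F * F = S /\ 0 <= S / F <= / flo.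
Proof.
  intros HS H1 H2. destruct (Req_dec S 0) as [->|HS0].
  - assert (F = 0) by (assert (H := fup_ge_flo); nra). subst. unfold Rdiv. rewrite Rmult_0_l.
    split; [ring|split; [lra| left; apply Rinv_0_lt_compat; lra]].
  - assert (HF : 0 < F) by nra.
    split. field; lra.
    split. apply Rdiv_le_0_compat; lra.
    apply (Rmult_le_reg_r (F * flo)). nra.
    replace (S / F * (F * flo)) with (S * flo) by (field; lra).
    replace (/ flo * (F * flo)) with F by (field; lra). lra.
Qed.

Definition Kf := 2 / flo + fup / (flo * flo).

Lemma ratio_lip Sx Sy Fx Fy d :
  0 <= Sx -> 0 <= Sy -> flo*Sx <= Fx -> Fx <= fup*Sx -> flo*Sy <= Fy -> Fy <= fup*Sy ->
  Rabs (Sx - Sy) <= d -> Rabs (Fx - Fy) <= fup * d ->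
  Sy * Rabs (Sx/Fx - Sy/Fy) <= (/flo + fup/(flo*flo)) * d.
Proof.
  intros H1 H2 H3 H4 H5 H6 H7 H8.
  destruct (ratio_facts Sx Fx) as [Ex [Rx1 Rx2]]; auto.
  destruct (ratio_facts Sy Fy) as [Ey [Ry1 Ry2]]; auto.
  set (rx := Sx / Fx) in *. set (ry := Sy / Fy) in *.
  assert (Hid : Sy * (rx - ry) = ry * (rx * (Fy - Fx) + (Sx - Sy))).
  { clearbody rx ry. rewrite <- Ex, <- Ey. ring. }
  assert (Hd : 0 <= d) by (assert (0 <= Rabs (Sx - Sy)) by apply Rabs_pos; lra).
  rewrite <- (Rabs_right Sy) by lra. rewrite <- Rabs_mult, Hid.
  rewrite Rabs_mult, (Rabs_right ry) by lra.
  assert (Ha : Rabs (rx * (Fy - Fx) + (Sx - Sy)) <= rx * (fup * d) + d).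
  { eapply Rle_trans. apply Rabs_triang. rewrite Rabs_mult, (Rabs_right rx) by lra.
    rewrite Rabs_minus_sym. apply Rplus_le_compat; auto. apply Rmult_le_compat_l; lra. }
  assert (Hfup : 0 <= fup) by (assert (H := fup_ge_flo); lra).
  apply Rle_trans with (ry * (rx * (fup * d) + d)).
  apply Rmult_le_compat_l; lra.
  apply Rle_trans with (/flo * (/flo * (fup * d) + d)).
  apply Rmult_le_compat; try lra. apply Rplus_le_le_0_compat; try lra. apply Rmult_le_pos; try lra. nra.
  apply Rplus_le_compat_r. apply Rmult_le_compat_r; nra.
  right. field. lra.
Qed.

Lemma row_SF (x : nat -> R) : (forall l, 0 <= x l) -> sm x ->
  ex_series x /\ ex_series (fun l => f (INR l) * x l) /\ 0 <= Series x /\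
  flo * Series x <= Series (fun l => f (INR l) * x l) /\
  Series (fun l => f (INR l) * x l) <= fup * Series x.
Proof.
  intros Hx Hs. assert (Hs' : ex_series x) by (apply exs_abs; exact Hs).
  assert (Hfx : ex_series (fun l => f (INR l) * x l)).
  { apply (exs_le _ (fun l => fup * Rabs (x l))). intro l. rewrite Rabs_mult.
    apply Rmult_le_compat_r. apply Rabs_pos. rewrite Rabs_right. apply Hf. destruct (Hf (INR l)); lra.
    apply exs_scal; exact Hs. }
  repeat split; auto.
  - apply ser_ge0; auto.
  - rewrite <- Series_scal_l. apply Series_le; auto. intro n. destruct (Hf (INR n)).
    specialize (Hx n). split; nra.
  - rewrite <- Series_scal_l. apply Series_le. intro n. destruct (Hf (INR n)).
    specialize (Hx n). split; nra. apply exs_scal; auto.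
Qed.

Lemma frac_eq (x : rfamily) i j : (forall l, 0 <= x i l) -> sm (x i) ->
  frac f x i j = x i j * (Series (x i) / Series (fun l => f (INR l) * x i l)).
Proof.
  intros Hx Hs. destruct (row_SF (x i) Hx Hs) as [_ [_ [H1 [H2 H3]]]].
  unfold frac, phi. destruct (Req_EM_T (Series (x i)) 0) as [E|E].
  - rewrite E. unfold Rdiv. ring.
  - assert (0 < Series (fun l => f (INR l) * x i l)) by nra.
    field. lra.
Qed.

Lemma frac_lip (x y : nat -> R) : (forall l, 0 <= x l) -> (forall l, 0 <= y l) -> sm x -> sm y ->
  let rx := Series x / Series (fun l => f (INR l) * x l) in
  let ry := Series y / Series (fun l => f (INR l) * y l) in
  sm (fun j => f (INR j) * (x j * rx) - f (INR j) * (y j * ry)) /\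
  nrm (fun j => f (INR j) * (x j * rx) - f (INR j) * (y j * ry)) <= fup * Kf * nrm (fun j => x j - y j).
Proof.
  intros Hx Hy Hsx Hsy rx ry.
  destruct (row_SF x Hx Hsx) as [Ex [EFx [Sx0 [Fx1 Fx2]]]].
  destruct (row_SF y Hy Hsy) as [Ey [EFy [Sy0 [Fy1 Fy2]]]].
  destruct (ratio_facts _ _ Sx0 Fx1 Fx2) as [_ [Rx1 Rx2]]. fold rx in Rx1, Rx2.
  assert (Hsd : sm (fun j => x j - y j)).
  { apply (exs_le _ (fun j => Rabs (x j) + Rabs (y j))). intro j. rewrite Rabs_Rabsolu. apply Rabs_triang_inv2 || (unfold Rminus; eapply Rle_trans; [apply Rabs_triang|rewrite Rabs_Ropp; lra]).
    apply exs_plus; auto. }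
  set (d := nrm (fun j => x j - y j)).
  assert (HS : Rabs (Series x - Series y) <= d).
  { rewrite <- Series_minus by auto. apply Series_Rabs. exact Hsd. }
  assert (HF : Rabs (Series (fun l => f (INR l) * x l) - Series (fun l => f (INR l) * y l)) <= fup * d).
  { rewrite <- Series_minus by auto. unfold d, nrm. rewrite <- Series_scal_l.
    eapply Rle_trans. apply Series_Rabs.
    apply (exs_le _ (fun j => fup * Rabs (x j - y j))). intro j. rewrite Rabs_Rabsolu.
    replace (f (INR j) * x j - f (INR j) * y j) with (f (INR j) * (x j - y j)) by ring.
    rewrite Rabs_mult. apply Rmult_le_compat_r. apply Rabs_pos. rewrite Rabs_right. apply Hf. destruct (Hf (INR j)); lra.
    apply exs_scal; exact Hsd.
    apply Series_le. intro j. split. apply Rabs_pos.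
    replace (f (INR j) * x j - f (INR j) * y j) with (f (INR j) * (x j - y j)) by ring.
    rewrite Rabs_mult. apply Rmult_le_compat_r. apply Rabs_pos. rewrite Rabs_right. apply Hf. destruct (Hf (INR j)); lra.
    apply exs_scal; exact Hsd. }
  assert (HR := ratio_lip _ _ _ _ d Sx0 Sy0 Fx1 Fx2 Fy1 Fy2 HS HF). fold rx ry in HR.
  assert (Hd0 : 0 <= d) by (apply nrm_ge0; auto).
  assert (Hfup : 0 <= fup) by (assert (H := fup_ge_flo); lra).
  apply row_bound. intros J.
  apply Rle_trans with (sum_f_R0 (fun j => fup * (Rabs (x j - y j) * rx + y j * Rabs (rx - ry))) J).
  { apply sum_Rle. intros j _.
    replace (f (INR j) * (x j * rx) - f (INR j) * (y j * ry)) with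
      (f (INR j) * ((x j - y j) * rx + y j * (rx - ry))) by ring.
    rewrite Rabs_mult. apply Rmult_le_compat. apply Rabs_pos. apply Rabs_pos.
    rewrite Rabs_right. apply Hf. destruct (Hf (INR j)); lra.
    eapply Rle_trans. apply Rabs_triang. rewrite !Rabs_mult, (Rabs_right rx), (Rabs_right (y j)) by (first [specialize (Hy j); lra | lra]). lra. }
  rewrite sum_scal_l, Rmult_assoc. apply Rmult_le_compat_l; auto.
  rewrite sum_plus, !sum_scal_r.
  assert (H1 : sum_f_R0 (fun j => Rabs (x j - y j)) J <= d) by (apply row_partial; auto).
  assert (H2 : sum_f_R0 y J <= Series y) by (apply ser_partial_le; auto).
  assert (H3 : 0 <= sum_f_R0 (fun j => Rabs (x j - y j)) J) by (apply sum_nonneg; intros; apply Rabs_pos).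
  assert (H4 : 0 <= Rabs (rx - ry)) by apply Rabs_pos.
  apply Rle_trans with (d * rx + Series y * Rabs (rx - ry)).
  apply Rplus_le_compat. apply Rmult_le_compat_r; lra.
  assert (0 <= sum_f_R0 y J) by (apply sum_nonneg; auto). apply Rmult_le_compat_r; lra.
  unfold Kf. replace (2 / flo + fup / (flo * flo)) with (/flo + (/flo + fup/(flo*flo))) by (field; lra).
  rewrite Rmult_plus_distr_r. apply Rplus_le_compat. rewrite (Rmult_comm (/flo) d); apply Rmult_le_compat_l; auto.
  exact HR.
Qed.

Definition G s (y : rfamily) := Psi M lam f mu s (ppos y).

Lemma G_decomp s y i j : G s y i j =
  Series (fun k => mu i k j * ppos y i k)
  + (if (1 <=? i)%nat then lam s (i-1)%nat else 0) * (f (INR j) * frac f (ppos y) (i-1)%nat j)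
  - (if (i <=? M-1)%nat then lam s i else 0) * (f (INR j) * frac f (ppos y) i j).
Proof. unfold G, Psi. destruct (1 <=? i)%nat; destruct (i <=? M-1)%nat; ring. Qed.

Definition Cg Blam := 2 * Bmu + 2 * Blam * fup * Kf.

Lemma frac_row_lip (y z : rfamily) k : sm (y k) -> sm (z k) ->
  sm (fun j => f (INR j) * frac f (ppos y) k j - f (INR j) * frac f (ppos z) k j) /\
  nrm (fun j => f (INR j) * frac f (ppos y) k j - f (INR j) * frac f (ppos z) k j)
    <= fup * Kf * nrm (fun j => y k j - z k j).
Proof.
  intros Hy Hz.
  assert (Py := pos_sm y k Hy). assert (Pz := pos_sm z k Hz).
  assert (E : forall j, f (INR j) * frac f (ppos y) k j - f (INR j) * frac f (ppos z) k j =
     f (INR j) * (ppos y k j * (Series (ppos y k) / Series (fun l => f (INR l) * ppos y k l))) -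
     f (INR j) * (ppos z k j * (Series (ppos z k) / Series (fun l => f (INR l) * ppos z k l)))).
  { intro j. rewrite !frac_eq; auto; intros; apply pos_nonneg. }
  destruct (frac_lip (ppos y k) (ppos z k)) as [H1 H2]; auto; try (intros; apply pos_nonneg).
  split. eapply sm_ext; [|exact H1]. intro; now rewrite E.
  rewrite (nrm_ext _ _ E). eapply Rle_trans. exact H2.
  assert (0 <= fup * Kf).
  { apply Rmult_le_pos. assert (H := fup_ge_flo); lra. unfold Kf.
    apply Rplus_le_le_0_compat. apply Rdiv_le_0_compat; lra.
    apply Rdiv_le_0_compat. assert (H := fup_ge_flo); lra. nra. }
  apply Rmult_le_compat_l; auto. apply pos_nrm; auto.
Qed.

Lemma G_row_lip s Blam (y z : rfamily) i :
  0 <= Blam -> (forall x, (x <= M)%nat -> Rabs (lam s x) <= Blam) ->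
  summable M y -> summable M z -> (i <= M)%nat ->
  sm (fun j => G s y i j - G s z i j) /\
  nrm (fun j => G s y i j - G s z i j) <= Cg Blam * l1norm M (fun i j => y i j - z i j).
Proof.
  intros HB Hlam Hy Hz Hi.
  assert (Hyz := summable_minus M y z Hy Hz).
  set (D := l1norm M (fun i j => y i j - z i j)).
  set (c1 := if (1 <=? i)%nat then lam s (i-1)%nat else 0).
  set (c2 := if (i <=? M-1)%nat then lam s i else 0).
  assert (Hc1 : Rabs c1 <= Blam). { unfold c1. destruct (1 <=? i)%nat. apply Hlam; lia. rewrite Rabs_R0; lra. }
  assert (Hc2 : Rabs c2 <= Blam). { unfold c2. destruct (i <=? M-1)%nat. apply Hlam; lia. rewrite Rabs_R0; lra. }
  destruct (pos_nrm y z i) as [Pd1 Pd2]; try apply Hy; try apply Hz; auto.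
  destruct (A_bound i (fun j => ppos y i j - ppos z i j) Hi Pd1) as [A1 A2].
  assert (EA : forall j, Series (fun k => mu i k j * ppos y i k) - Series (fun k => mu i k j * ppos z i k) =
     Series (fun k => mu i k j * (ppos y i k - ppos z i k))).
  { intro j. apply A_minus; auto; apply pos_sm; [apply Hy|apply Hz]; auto. }
  destruct (frac_row_lip y z (i-1)%nat) as [F1 F1b]; try apply Hy; try apply Hz; try lia.
  destruct (frac_row_lip y z i) as [F2 F2b]; try apply Hy; try apply Hz; try lia.
  assert (N1 : nrm (fun j => y i j - z i j) <= D) by (apply (row_le_l1 M (fun i j => y i j - z i j)); auto).
  assert (N2 : nrm (fun j => y (i-1)%nat j - z (i-1)%nat j) <= D) by (apply (row_le_l1 M (fun i j => y i j - z i j)); auto; lia).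
  assert (Hfk : 0 <= fup * Kf).
  { apply Rmult_le_pos. assert (H := fup_ge_flo); lra. unfold Kf.
    apply Rplus_le_le_0_compat. apply Rdiv_le_0_compat; lra.
    apply Rdiv_le_0_compat. assert (H := fup_ge_flo); lra. nra. }
  apply row_bound. intros J.
  apply Rle_trans with (sum_f_R0 (fun j => Rabs (Series (fun k => mu i k j * (ppos y i k - ppos z i k)))) J
     + Blam * sum_f_R0 (fun j => Rabs (f (INR j) * frac f (ppos y) (i-1)%nat j - f (INR j) * frac f (ppos z) (i-1)%nat j)) J
     + Blam * sum_f_R0 (fun j => Rabs (f (INR j) * frac f (ppos y) i j - f (INR j) * frac f (ppos z) i j)) J).
  { rewrite <- !sum_scal_l, <- !sum_plus. apply sum_Rle. intros j _.
    rewrite !G_decomp. fold c1 c2. rewrite <- EA.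
    match goal with |- Rabs ?e <= _ => replace e with
      ((Series (fun k => mu i k j * ppos y i k) - Series (fun k => mu i k j * ppos z i k))
       + c1 * (f (INR j) * frac f (ppos y) (i-1)%nat j - f (INR j) * frac f (ppos z) (i-1)%nat j)
       - c2 * (f (INR j) * frac f (ppos y) i j - f (INR j) * frac f (ppos z) i j)) by ring end.
    unfold Rminus at 1. eapply Rle_trans. apply Rabs_triang. rewrite Rabs_Ropp.
    apply Rplus_le_compat. eapply Rle_trans. apply Rabs_triang. apply Rplus_le_compat. lra.
    rewrite Rabs_mult. apply Rmult_le_compat_r. apply Rabs_pos. auto.
    rewrite Rabs_mult. apply Rmult_le_compat_r. apply Rabs_pos. auto. }
  assert (S1 := row_partial _ J A1). assert (S2 := row_partial _ J F1). assert (S3 := row_partial _ J F2).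
  unfold Cg.
  apply Rle_trans with (2 * Bmu * D + Blam * (fup * Kf * D) + Blam * (fup * Kf * D)).
  - apply Rplus_le_compat. apply Rplus_le_compat.
    + eapply Rle_trans. exact S1. eapply Rle_trans. exact A2. assert (H := Bmu_ge0).
      apply Rmult_le_compat_l. lra. lra.
    + apply Rmult_le_compat_l; auto. eapply Rle_trans. exact S2. eapply Rle_trans. exact F1b.
      apply Rmult_le_compat_l; auto.
    + apply Rmult_le_compat_l; auto. eapply Rle_trans. exact S3. eapply Rle_trans. exact F2b.
      apply Rmult_le_compat_l; auto.
  - right. ring.
Qed.

Lemma G_lip s Blam (y z : rfamily) :
  0 <= Blam -> (forall x, (x <= M)%nat -> Rabs (lam s x) <= Blam) ->
  summable M y -> summable M z ->
  summable M (fun i j => G s y i j - G s z i j) /\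
  l1norm M (fun i j => G s y i j - G s z i j) <= INR (S M) * Cg Blam * l1norm M (fun i j => y i j - z i j).
Proof.
  intros HB Hlam Hy Hz. apply fam_bound. intros J.
  apply Rle_trans with (sum_f_R0 (fun _ => Cg Blam * l1norm M (fun i j => y i j - z i j)) M).
  apply sum_Rle. intros i Hi. destruct (G_row_lip s Blam y z i) as [H1 H2]; auto.
  eapply Rle_trans. apply row_partial. exact H1. exact H2.
  rewrite sum_cte. right; ring.
Qed.

Lemma G_zero s i j : G s (fun _ _ => 0) i j = 0.
Proof.
  assert (Hp : forall k l, ppos (fun _ _ => 0) k l = 0). { intros; unfold Defs.pos; apply Rmax_left; lra. }
  assert (Hs : forall k, Series (ppos (fun _ _ => 0) k) = 0).
  { intro k. transitivity (Series (fun _ => 0)). apply Series_ext. intro; apply Hp. apply ser_zero. }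
  assert (Hfr : forall k l, frac f (ppos (fun _ _ => 0)) k l = 0).
  { intros k l. unfold frac. destruct Req_EM_T as [_|E]. reflexivity. exfalso; apply E, Hs. }
  rewrite G_decomp, !Hfr.
  rewrite (Series_ext _ (fun _ => 0)), ser_zero. ring. intro; rewrite Hp; ring.
Qed.

Lemma G_bound s Blam (y : rfamily) :
  0 <= Blam -> (forall x, (x <= M)%nat -> Rabs (lam s x) <= Blam) ->
  summable M y -> summable M (G s y) /\ l1norm M (G s y) <= INR (S M) * Cg Blam * l1norm M y.
Proof.
  intros HB Hlam Hy.
  destruct (G_lip s Blam y (fun _ _ => 0)) as [H1 H2]; auto. apply summable_zero.
  assert (E1 : forall i j, G s y i j - G s (fun _ _ => 0) i j = G s y i j). { intros; rewrite G_zero; ring. }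
  assert (E2 : forall i j, y i j - 0 = y i j). { intros; ring. }
  split. eapply summable_ext; [exact E1|exact H1].
  rewrite <- (l1_ext M _ _ E1), <- (l1_ext M _ _ E2). exact H2.
Qed.

Variables (x0 y0 : nat).
Hypothesis Hx0 : (x0 <= M)%nat.
Hypothesis Hlam0 : forall t x, 0 <= t -> (x <= M)%nat -> 0 <= lam t x.
Hypothesis Hrcl : forall x, (x <= M)%nat -> forall t, 0 <= t -> rc (fun s => lam s x) t.
Hypothesis Hlll : forall x, (x <= M)%nat -> forall t, 0 < t -> exists l, ll (fun s => lam s x) t l.
Hypothesis HlamB : forall T, 0 < T -> exists B, forall t x, 0 <= t <= T -> (x <= M)%nat -> Rabs (lam t x) <= B.

Definition l1c (y : R -> rfamily) t := forall e, 0 < e -> exists d, 0 < d /\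
  forall s, Rabs (s - t) < d -> l1norm M (fun i j => y s i j - y t i j) < e.

Lemma cont_of_bound (y : R -> rfamily) (phi : R -> R) t K : 0 <= K ->
  (forall s, Rabs (phi s - phi t) <= K * l1norm M (fun i j => y s i j - y t i j)) -> l1c y t -> continuous phi t.
Proof.
  intros HK Hb Hc. apply continuity_pt_filterlim.
  unfold continuity_pt, continue_in, limit1_in, limit_in. intros eps Heps.
  destruct (Hc (eps / (K + 1))) as [d [Hd Hd']]. apply Rdiv_lt_0_compat; lra.
  exists d. split; auto. intros x [_ Hx]. simpl in *. unfold R_dist in *.
  eapply Rle_lt_trans. apply Hb.
  specialize (Hd' x Hx).
  apply Rle_lt_trans with (K * (eps / (K + 1))).
  apply Rmult_le_compat_l; auto. left; exact Hd'.
  apply Rlt_le_trans with ((K + 1) * (eps / (K + 1))). apply Rmult_lt_compat_r. apply Rdiv_lt_0_compat; lra. lra.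
  right; field; lra.
Qed.

Lemma A_cont (y : R -> rfamily) t i j : (forall s, summable M (y s)) -> l1c y t -> (i <= M)%nat ->
  continuous (fun s => Series (fun k => mu i k j * ppos (y s) i k)) t.
Proof.
  intros Hs Hc Hi. apply (cont_of_bound y _ t (2 * Bmu)); auto. assert (H := Bmu_ge0); lra.
  intro s. destruct (pos_nrm (y s) (y t) i) as [P1 P2]; try apply Hs; auto.
  rewrite A_minus; auto; try (apply pos_sm; apply Hs; auto).
  destruct (A_bound i _ Hi P1) as [A1 A2].
  eapply Rle_trans. apply (abs_le_nrm _ j A1). eapply Rle_trans. exact A2.
  apply Rmult_le_compat_l. assert (H := Bmu_ge0); lra. eapply Rle_trans. exact P2.
  apply (row_le_l1 M (fun i j => y s i j - y t i j)); auto. apply summable_minus; auto.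
Qed.

Lemma Fr_cont (y : R -> rfamily) t i j : (forall s, summable M (y s)) -> l1c y t -> (i <= M)%nat ->
  continuous (fun s => f (INR j) * frac f (ppos (y s)) i j) t.
Proof.
  intros Hs Hc Hi. apply (cont_of_bound y _ t (fup * Kf)).
  { apply Rmult_le_pos. assert (H := fup_ge_flo); lra. unfold Kf.
    apply Rplus_le_le_0_compat. apply Rdiv_le_0_compat; lra.
    apply Rdiv_le_0_compat. assert (H := fup_ge_flo); lra. nra. }
  intro s. destruct (frac_row_lip (y s) (y t) i) as [F1 F2]; try apply Hs; auto. idtac.
  eapply Rle_trans. apply (abs_le_nrm _ j F1). eapply Rle_trans. exact F2.
  apply Rmult_le_compat_l.
  { apply Rmult_le_pos. assert (H := fup_ge_flo); lra. unfold Kf.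
    apply Rplus_le_le_0_compat. apply Rdiv_le_0_compat; lra.
    apply Rdiv_le_0_compat. assert (H := fup_ge_flo); lra. nra. }
  apply (row_le_l1 M (fun i j => y s i j - y t i j)); auto. apply summable_minus; auto.
  exact Hc.
Qed.

Lemma coef_int (c : R -> R) (h : R -> R) t : 0 <= t -> (forall s, continuous h s) ->
  ((forall s, c s = 0) \/ exists x, (x <= M)%nat /\ forall s, c s = lam s x) ->
  ex_RInt (fun s => c s * h s) 0 t.
Proof.
  intros Ht Hh [Hc|[x [Hx Hc]]].
  - apply (ex_RInt_ext (fun s => 0 * h s)). intros; rewrite Hc; reflexivity.
    apply ex_RInt_cont. apply cont_scal; auto.
  - apply (ex_RInt_ext (fun s => lam s x * h s)). intros; rewrite Hc; reflexivity.
    apply cadlag_int; auto. intros s Hs; apply Hrcl; auto; lra.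
    intros s Hs; apply Hlll; auto; lra.
Qed.

Lemma G_int (y : R -> rfamily) t i j : 0 <= t -> (forall s, summable M (y s)) -> (forall s, l1c y s) ->
  (i <= M)%nat -> ex_RInt (fun s => G s (y s) i j) 0 t.
Proof.
  intros Ht Hs Hc Hi.
  apply (ex_RInt_ext (fun s => Series (fun k => mu i k j * ppos (y s) i k)
    + (if (1 <=? i)%nat then lam s (i-1)%nat else 0) * (f (INR j) * frac f (ppos (y s)) (i-1)%nat j)
    - (if (i <=? M-1)%nat then lam s i else 0) * (f (INR j) * frac f (ppos (y s)) i j))).
  { intros; rewrite G_decomp; reflexivity. }
  apply exR_minus. apply exR_plus.
  - apply ex_RInt_cont. intro s. apply A_cont; auto.
  - apply coef_int; auto. intro s; apply Fr_cont; auto; lia.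
    destruct (1 <=? i)%nat. right; exists (i-1)%nat; split; [lia|auto]. left; auto.
  - apply coef_int; auto. intro s; apply Fr_cont; auto; lia.
    destruct (i <=? M-1)%nat. right; exists i; split; [lia|auto]. left; auto.
Qed.

Lemma l1_sym (u v : rfamily) : l1norm M (fun i j => u i j - v i j) = l1norm M (fun i j => v i j - u i j).
Proof. unfold l1norm. apply sum_eq; intros; unfold nrm; apply Series_ext; intro; apply Rabs_minus_sym. Qed.

Lemma l1_tri3 (u v w : rfamily) : summable M u -> summable M v -> summable M w ->
  l1norm M (fun i j => u i j - w i j) <= l1norm M (fun i j => u i j - v i j) + l1norm M (fun i j => v i j - w i j).
Proof.
  intros Hu Hv Hw.
  destruct (l1_triangle M (fun i j => u i j - v i j) (fun i j => v i j - w i j)) as [_ H];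
    try apply summable_minus; auto.
  rewrite (l1_ext M _ (fun i j => u i j - w i j)) in H by (intros; ring). exact H.
Qed.

Lemma l1_rev (u v : rfamily) : summable M u -> summable M v ->
  Rabs (l1norm M u - l1norm M v) <= l1norm M (fun i j => u i j - v i j).
Proof.
  intros Hu Hv. assert (Hz := summable_zero M).
  assert (H1 := l1_tri3 u v (fun _ _ => 0) Hu Hv Hz).
  assert (H2 := l1_tri3 v u (fun _ _ => 0) Hv Hu Hz).
  rewrite (l1_ext M _ u) in H1 by (intros; ring).
  rewrite (l1_ext M (fun i j => v i j - 0) v) in H1 by (intros; ring).
  rewrite (l1_ext M _ v) in H2 by (intros; ring).
  rewrite (l1_ext M (fun i j => u i j - 0) u) in H2 by (intros; ring).
  rewrite l1_sym in H2. apply Rabs_le; lra.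
Qed.

Lemma comp_le_l1 (u : rfamily) i j : summable M u -> (i <= M)%nat -> Rabs (u i j) <= l1norm M u.
Proof. intros Hu Hi. eapply Rle_trans. apply abs_le_nrm. apply Hu; auto. apply row_le_l1; auto. Qed.

Lemma l1c_cont (y : R -> rfamily) t : (forall s, summable M (y s)) -> l1c y t ->
  continuity_pt (fun s => l1norm M (y s)) t.
Proof.
  intros Hs Hc. unfold continuity_pt, continue_in, limit1_in, limit_in. intros eps Heps.
  destruct (Hc eps Heps) as [d [Hd Hd']]. exists d. split; auto. intros x [_ Hx]. simpl in *. unfold R_dist in *.
  eapply Rle_lt_trans. apply l1_rev; auto. apply Hd'; auto.
Qed.

Lemma l1c_bounded (y : R -> rfamily) T : 0 <= T -> (forall s, summable M (y s)) -> (forall s, l1c y s) ->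
  exists Rb, 0 <= Rb /\ forall s, 0 <= s <= T -> l1norm M (y s) <= Rb.
Proof.
  intros HT Hs Hc. destruct (continuity_ab_maj (fun s => l1norm M (y s)) 0 T HT) as [m [Hm _]].
  intros; apply l1c_cont; auto.
  exists (l1norm M (y m)). split. apply l1_ge0; auto. exact Hm.
Qed.

Lemma lip_l1c (y : R -> rfamily) :
  (forall T, 0 < T -> exists K, 0 <= K /\ forall t t', 0 <= t <= T -> 0 <= t' <= T ->
     l1norm M (fun i j => y t i j - y t' i j) <= K * Rabs (t - t')) ->
  forall t, l1c (fun s => y (Rmax 0 s)) t.
Proof.
  intros HL t e He. destruct (HL (Rabs t + 1)) as [K [HK HK']]. assert (0 <= Rabs t) by apply Rabs_pos. lra.
  exists (Rmin 1 (e / (K + 1))). split. apply Rmin_pos. lra. apply Rdiv_lt_0_compat; lra.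
  intros s Hs. assert (Hs1 : Rabs (s - t) < 1) by (eapply Rlt_le_trans; [exact Hs|apply Rmin_l]).
  assert (Hs2 : Rabs (s - t) < e / (K + 1)) by (eapply Rlt_le_trans; [exact Hs|apply Rmin_r]).
  assert (Hmax : Rabs (Rmax 0 s - Rmax 0 t) <= Rabs (s - t)).
  { unfold Rmax. repeat destruct Rle_dec; unfold Rabs; repeat destruct Rcase_abs; lra. }
  assert (Ht0 : 0 <= Rabs t) by apply Rabs_pos.
  assert (B1 : 0 <= Rmax 0 s <= Rabs t + 1).
  { split. apply Rmax_l. assert (s - t <= Rabs (s - t)) by apply RRle_abs. assert (t <= Rabs t) by apply RRle_abs.
    unfold Rmax. destruct Rle_dec; lra. }
  assert (B2 : 0 <= Rmax 0 t <= Rabs t + 1).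
  { split. apply Rmax_l. assert (t <= Rabs t) by apply RRle_abs. unfold Rmax. destruct Rle_dec; lra. }
  eapply Rle_lt_trans. apply HK'; auto.
  apply Rle_lt_trans with (K * (e / (K + 1))). apply Rmult_le_compat_l; lra.
  apply Rlt_le_trans with ((K + 1) * (e / (K + 1))). apply Rmult_lt_compat_r. apply Rdiv_lt_0_compat; lra. lra.
  right; field; lra.
Qed.

Lemma sum_indic N m : sum_f_R0 (fun j => if (j =? m)%nat then 1 else 0) N = if (m <=? N)%nat then 1 else 0.
Proof.
  induction N.
  - destruct m; simpl; reflexivity.
  - rewrite tech5, IHN. destruct (Nat.eq_dec m (S N)) as [->|Hne].
    + rewrite Nat.eqb_refl. rewrite (proj2 (Nat.leb_nle (S N) N)) by lia. rewrite Nat.leb_refl. ring.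
    + rewrite (proj2 (Nat.eqb_neq (S N) m)) by lia.
      destruct (m <=? N)%nat eqn:E.
      * apply Nat.leb_le in E. rewrite (proj2 (Nat.leb_le m (S N))) by lia. ring.
      * apply Nat.leb_nle in E. rewrite (proj2 (Nat.leb_nle m (S N))) by lia. ring.
Qed.

Lemma P0_partial J : sum_f_R0 (fun i => sum_f_R0 (fun j => P0 x0 y0 i j) J) M = if (y0 <=? J)%nat then 1 else 0.
Proof.
  unfold P0.
  rewrite (sum_eq _ (fun i => (if (i =? x0)%nat then 1 else 0) * (if (y0 <=? J)%nat then 1 else 0))).
  rewrite sum_scal_r, sum_indic, (proj2 (Nat.leb_le x0 M)) by auto. ring.
  intros i _. destruct (i =? x0)%nat; simpl.
  rewrite sum_indic; ring.
  rewrite sum_cte; ring.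
Qed.

Lemma P0_nonneg i j : 0 <= P0 x0 y0 i j.
Proof. unfold P0. destruct (_ && _)%bool; lra. Qed.

Lemma P0_l1 : summable M (P0 x0 y0) /\ l1norm M (P0 x0 y0) <= 1.
Proof.
  apply fam_bound. intro J. rewrite (sum_eq _ (fun i => sum_f_R0 (fun j => P0 x0 y0 i j) J)).
  rewrite P0_partial. destruct (y0 <=? J)%nat; lra.
  intros i _. apply sum_eq. intros j _. apply Rabs_right. apply Rle_ge, P0_nonneg.
Qed.

Fixpoint sumb (a : nat -> R) n := match n with O => 0 | S n => sumb a n + a n end.

Lemma ser_shift (a : nat -> R) n : ex_series a -> Series a = sumb a n + Series (fun k => a (n + k)%nat).
Proof.
  intros Ha. induction n; simpl.
  - rewrite Rplus_0_l. apply Series_ext. reflexivity.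
  - rewrite IHn. rewrite (Series_incr_1 (fun k => a (n + k)%nat)).
    rewrite Nat.add_0_r. rewrite Rplus_assoc. f_equal. f_equal. apply Series_ext. intro k. f_equal. lia.
    apply (ex_series_incr_n a n). exact Ha.
Qed.

Lemma geo_zero a b c : 0 <= c -> (forall n, a <= b + c * (/2) ^ n) -> a <= b.
Proof.
  intros Hc H. destruct (Rle_or_lt a b) as [|Hlt]; auto. exfalso.
  destruct (pow_lt_1_zero (/2)) with (y := (a - b) / (c + 1)) as [N HN].
  rewrite Rabs_right; lra. apply Rdiv_lt_0_compat; lra.
  specialize (HN N (Nat.le_refl N)). rewrite Rabs_right in HN by (apply Rle_ge, pow_le; lra).
  specialize (H N). assert (c * (/2)^N <= (c + 1) * (/2)^N) by (apply Rmult_le_compat_r; [apply pow_le|]; lra).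
  assert ((c + 1) * (/2)^N < (c + 1) * ((a - b) / (c + 1))) by (apply Rmult_lt_compat_l; lra).
  replace ((c + 1) * ((a - b) / (c + 1))) with (a - b) in * by (field; lra). lra.
Qed.

Lemma geo_series c n : 0 <= c -> ex_series (fun k => c * (/2) ^ (n + k)) /\
  Series (fun k => c * (/2) ^ (n + k)) = 2 * c * (/2) ^ n.
Proof.
  intros Hc. assert (Hg : is_series (fun k => (/2) ^ k) (/ (1 - /2))) by (apply is_series_geom; rewrite Rabs_right; lra).
  assert (E : forall k, c * (/2) ^ (n + k) = (c * (/2)^n) * (/2) ^ k) by (intro; rewrite pow_add; ring).
  split.
  - apply (ex_series_ext (fun k => (c * (/2)^n) * (/2) ^ k)). intro k. rewrite E; reflexivity.
    apply exs_scal. eexists; exact Hg.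
  - rewrite (Series_ext _ (fun k => (c * (/2)^n) * (/2) ^ k)) by apply E.
    rewrite Series_scal_l. rewrite (is_series_unique (pow (/2)) _ Hg). field.
Qed.

Lemma l1_zero : l1norm M (fun _ _ => 0) = 0.
Proof. unfold l1norm. rewrite (sum_eq _ (fun _ => 0)). rewrite sum_cte; ring. intros; apply nrm_zero. Qed.

Lemma l1_self (u : rfamily) : l1norm M (fun i j => u i j - u i j) = 0.
Proof. rewrite (l1_ext M _ (fun _ _ => 0)) by (intros; ring). apply l1_zero. Qed.

Lemma l1_ext' (u v : rfamily) : (forall i j, (i <= M)%nat -> u i j = v i j) -> l1norm M u = l1norm M v.
Proof. intros H. unfold l1norm. apply sum_eq. intros; apply nrm_ext; intro; apply H; auto. Qed.
Lemma summable_ext' (u v : rfamily) : (forall i j, (i <= M)%nat -> u i j = v i j) -> summable M u -> summable M v.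
Proof. intros H Hu i Hi. apply (sm_ext (u i)). intro; apply H; auto. apply Hu; auto. Qed.

Lemma lam_bound T : 0 < T -> exists B, 0 <= B /\ forall t x, 0 <= t <= T -> (x <= M)%nat -> Rabs (lam t x) <= B.
Proof.
  intros HT. destruct (HlamB T HT) as [B HB]. exists (Rabs B). split. apply Rabs_pos.
  intros. eapply Rle_trans. apply HB; auto. apply RRle_abs.
Qed.

Definition path_ok (y : R -> rfamily) :=
  (forall s, 0 <= s -> summable M (y s)) /\ (forall t, l1c (fun s => y (Rmax 0 s)) t).

Lemma path_ok_cut y : path_ok y -> forall s, summable M (y (Rmax 0 s)).
Proof. intros [H _] s. apply H. apply Rmax_l. Qed.

Lemma path_int y a b i j : path_ok y -> 0 <= a -> 0 <= b -> (i <= M)%nat ->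
  ex_RInt (fun s => G s (y (Rmax 0 s)) i j) a b.
Proof.
  intros Hy Ha Hb Hi. apply ex_RInt_Chasles with 0.
  apply ex_RInt_swap. apply G_int; auto. apply path_ok_cut; auto. apply Hy.
  apply G_int; auto. apply path_ok_cut; auto. apply Hy.
Qed.

Lemma path_Gbound y T : 0 < T -> path_ok y -> exists K, 0 <= K /\ forall s, 0 <= s <= T ->
  summable M (G s (y (Rmax 0 s))) /\ l1norm M (G s (y (Rmax 0 s))) <= K.
Proof.
  intros HT Hy. destruct (lam_bound T HT) as [B [HB HB']].
  destruct (l1c_bounded (fun s => y (Rmax 0 s)) T) as [Rb [HRb HRb']]; try lra. apply path_ok_cut; auto. apply Hy.
  assert (HC : 0 <= Cg B).
  { unfold Cg. assert (H := Bmu_ge0). assert (0 <= fup * Kf).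
    { apply Rmult_le_pos. assert (H1 := fup_ge_flo); lra. unfold Kf.
      apply Rplus_le_le_0_compat. apply Rdiv_le_0_compat; lra.
      apply Rdiv_le_0_compat. assert (H1 := fup_ge_flo); lra. nra. } nra. }
  exists (INR (S M) * Cg B * Rb). split. apply Rmult_le_pos; auto. apply Rmult_le_pos; auto. apply pos_INR.
  intros s Hs. destruct (G_bound s B (y (Rmax 0 s)) HB) as [H1 H2].
  { intros x Hx; apply HB'; auto; lra. } { apply path_ok_cut; auto. }
  split; auto. eapply Rle_trans. exact H2. apply Rmult_le_compat_l. apply Rmult_le_pos; auto. apply pos_INR.
  auto.
Qed.

Lemma int_diff (g : R -> R) a b c : ex_RInt g a b -> ex_RInt g b c -> RInt g a c - RInt g a b = RInt g b c.
Proof. intros H1 H2. rewrite <- (RInt_Chasles g a b c H1 H2). simpl. unfold plus; simpl. ring. Qed.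

Definition istep (y : R -> rfamily) : R -> rfamily :=
  fun t i j => P0 x0 y0 i j + RInt (fun s => G s (y (Rmax 0 s)) i j) 0 t.

Lemma istep_diff y t t' i j : path_ok y -> 0 <= t -> 0 <= t' -> (i <= M)%nat ->
  istep y t i j - istep y t' i j = RInt (fun s => G s (y (Rmax 0 s)) i j) t' t.
Proof.
  intros Hy Ht Ht' Hi. unfold istep.
  replace (P0 x0 y0 i j + RInt (fun s => G s (y (Rmax 0 s)) i j) 0 t -
    (P0 x0 y0 i j + RInt (fun s => G s (y (Rmax 0 s)) i j) 0 t'))
    with (RInt (fun s => G s (y (Rmax 0 s)) i j) 0 t - RInt (fun s => G s (y (Rmax 0 s)) i j) 0 t') by ring.
  apply int_diff; apply path_int; auto; lra.
Qed.

Lemma istep_ok y : path_ok y -> path_ok (istep y).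
Proof.
  intros Hy.
  assert (Hlip : forall T, 0 < T -> exists K, 0 <= K /\ forall t t', 0 <= t <= T -> 0 <= t' <= T ->
     summable M (fun i j => istep y t i j - istep y t' i j) /\
     l1norm M (fun i j => istep y t i j - istep y t' i j) <= K * Rabs (t - t')).
  { intros T HT. destruct (path_Gbound y T HT Hy) as [K [HK HK']]. exists K. split; auto.
    assert (Main : forall t t', 0 <= t' <= t -> t <= T ->
      summable M (fun i j => istep y t i j - istep y t' i j) /\
      l1norm M (fun i j => istep y t i j - istep y t' i j) <= K * Rabs (t - t')).
    { intros t t' Htt HtT.
      destruct (int_l1 M (fun s => G s (y (Rmax 0 s))) (fun _ => K) t' t) as [I1 I2]; try lra.
      intros; apply path_int; auto; lra. apply exR_const.
      intros s Hs. apply HK'. lra.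
      assert (E : forall i j, (i <= M)%nat -> istep y t i j - istep y t' i j = RInt (fun s => G s (y (Rmax 0 s)) i j) t' t).
      { intros; apply istep_diff; auto; lra. }
      split. intros i Hi. apply (sm_ext (fun j => RInt (fun s => G s (y (Rmax 0 s)) i j) t' t)).
      intro; rewrite E; auto. apply I1; auto.
      rewrite (l1_ext' _ _ E). rewrite R_const in I2. rewrite Rabs_right by lra. lra. }
    intros t t' Ht Ht'. destruct (Rle_or_lt t' t).
    apply Main; lra.
    destruct (Main t' t) as [A1 A2]; try lra. split.
    apply (summable_ext M (fun i j => - (istep y t' i j - istep y t i j))). intros; ring.
    intros i Hi. apply (exs_le _ (fun j => Rabs (istep y t' i j - istep y t i j))).
    intro; rewrite Rabs_Rabsolu, Rabs_Ropp; lra. apply A1; auto.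
    rewrite l1_sym, Rabs_minus_sym. exact A2. }
  split.
  - intros s Hs. destruct (Hlip (s + 1)) as [K [_ HK]]. lra.
    destruct (HK s 0) as [A1 _]; try lra.
    assert (Hz : forall i j, istep y 0 i j = P0 x0 y0 i j).
    { intros. unfold istep. rewrite RInt_point. unfold zero; simpl. ring. }
    apply (summable_ext M (fun i j => P0 x0 y0 i j + (istep y s i j - istep y 0 i j))).
    intros i j. rewrite Hz. ring.
    apply l1_triangle; auto. apply P0_l1.
  - apply lip_l1c. intros T HT. destruct (Hlip T HT) as [K [HK HK']]. exists K. split; auto.
    intros. apply HK'; auto.
Qed.

Fixpoint pic (n : nat) : R -> rfamily :=
  match n with
  | O => fun _ => P0 x0 y0
  | S n => istep (pic n)
  end.

Lemma P0_ok : path_ok (fun _ => P0 x0 y0).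
Proof.
  split. intros; apply P0_l1.
  intros t e He. exists 1. split. lra. intros. rewrite l1_self. exact He.
Qed.

Lemma pic_ok n : path_ok (pic n).
Proof. induction n. apply P0_ok. simpl. apply istep_ok; auto. Qed.

Lemma exp_mono x y : x <= y -> exp x <= exp y.
Proof. intros H. destruct (Rle_lt_or_eq_dec x y H) as [H' | ->]. left; apply exp_increasing; auto. lra. Qed.

Lemma Cg_ge0 B : 0 <= B -> 0 <= Cg B.
Proof.
  intros HB. unfold Cg. assert (H := Bmu_ge0). assert (0 <= fup * Kf).
  { apply Rmult_le_pos. assert (H1 := fup_ge_flo); lra. unfold Kf.
    apply Rplus_le_le_0_compat. apply Rdiv_le_0_compat; lra.
    apply Rdiv_le_0_compat. assert (H1 := fup_ge_flo); lra. nra. } nra.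
Qed.

Lemma lip_T T : 0 < T -> exists L, 0 < L /\ forall s (u v : rfamily), 0 <= s <= T -> summable M u -> summable M v ->
  summable M (fun i j => G s u i j - G s v i j) /\
  l1norm M (fun i j => G s u i j - G s v i j) <= L * l1norm M (fun i j => u i j - v i j).
Proof.
  intros HT. destruct (lam_bound T HT) as [B [HB HB']].
  exists (INR (S M) * Cg B + 1). split.
  assert (0 <= INR (S M) * Cg B) by (apply Rmult_le_pos; [apply pos_INR|apply Cg_ge0; auto]). lra.
  intros s u v Hs Hu Hv. destruct (G_lip s B u v HB) as [H1 H2]; auto.
  split; auto. eapply Rle_trans. exact H2. apply Rmult_le_compat_r. apply l1_ge0. apply summable_minus; auto. lra.
Qed.

Lemma pic_tele n t i j : pic n t i j = P0 x0 y0 i j + sumb (fun k => pic (S k) t i j - pic k t i j) n.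
Proof. induction n. simpl. ring. cbn [sumb]. rewrite <- Rplus_assoc, <- IHn. ring. Qed.

Lemma pic_est T : 0 < T -> exists C, 0 <= C /\ forall n t, 0 <= t <= T ->
  summable M (fun i j => pic (S n) t i j - pic n t i j) /\
  l1norm M (fun i j => pic (S n) t i j - pic n t i j) <= C * (/2) ^ n.
Proof.
  intros HT. destruct (lip_T T HT) as [L [HL HL']].
  set (K0 := T * L).
  assert (HK0 : 0 <= K0) by (unfold K0; nra).
  assert (Claim : forall n t, 0 <= t <= T ->
    summable M (fun i j => pic (S n) t i j - pic n t i j) /\
    l1norm M (fun i j => pic (S n) t i j - pic n t i j) <= K0 * (/2) ^ n * exp (2 * L * t)).
  { induction n; intros t Ht.
    - assert (E : forall i j, (i <= M)%nat -> pic 1 t i j - pic 0 t i j = RInt (fun s => G s (pic 0 (Rmax 0 s)) i j) 0 t).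
      { intros. simpl. unfold istep. simpl. ring. }
      destruct (int_l1 M (fun s => G s (pic 0 (Rmax 0 s))) (fun _ => L) 0 t) as [I1 I2]; try lra.
      intros; apply path_int; auto; try lra. apply pic_ok. apply exR_const.
      intros s Hs. simpl. destruct (HL' s (P0 x0 y0) (fun _ _ => 0)) as [H1 H2]; try lra; try apply P0_l1; try apply summable_zero.
      assert (E1 : forall i j, G s (P0 x0 y0) i j - G s (fun _ _ => 0) i j = G s (P0 x0 y0) i j) by (intros; rewrite G_zero; ring).
      assert (E2 : forall i j, P0 x0 y0 i j - 0 = P0 x0 y0 i j) by (intros; ring).
      rewrite (l1_ext M _ _ E1), (l1_ext M _ _ E2) in H2.
      split. eapply summable_ext; [exact E1|exact H1].
      eapply Rle_trans. exact H2. destruct P0_l1 as [_ HP].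
      rewrite <- (Rmult_1_r L) at 2. apply Rmult_le_compat_l; lra.
      split. apply (summable_ext' _ _ (fun i j Hi => eq_sym (E i j Hi))). exact I1.
      rewrite (l1_ext' _ _ E). rewrite R_const in I2.
      eapply Rle_trans. exact I2. simpl. rewrite Rmult_1_r.
      assert (1 <= exp (2 * L * t)). { rewrite <- exp_0. apply exp_mono. nra. }
      unfold K0. assert (T * L <= T * L * exp (2 * L * t)).
      { rewrite <- (Rmult_1_r (T * L)) at 1. apply Rmult_le_compat_l; nra. }
      assert ((t - 0) * L <= T * L) by (apply Rmult_le_compat_r; lra). lra.
    - destruct (Rle_dec 0 t) as [_|]; [|lra].
      set (F := fun s (i j : nat) => G s (pic (S n) (Rmax 0 s)) i j - G s (pic n (Rmax 0 s)) i j).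
      assert (E : forall i j, (i <= M)%nat -> pic (S (S n)) t i j - pic (S n) t i j = RInt (fun s => F s i j) 0 t).
      { intros i j Hi. change (istep (pic (S n)) t i j - istep (pic n) t i j = RInt (fun s => F s i j) 0 t).
        unfold istep, F. rewrite R_minus. ring. apply path_int; auto; try lra. apply pic_ok.
        apply path_int; auto; try lra. apply pic_ok. }
      destruct (exp_step L (K0 * (/2)^n) t HL) as [X1 X2]; try lra.
      apply Rmult_le_pos; auto. apply pow_le; lra.
      destruct (int_l1 M F (fun s => L * (K0 * (/2)^n * exp (2 * L * s))) 0 t) as [I1 I2]; try lra.
      intros; unfold F; apply exR_minus; apply path_int; auto; try lra; apply pic_ok. exact X1.
      intros s Hs. unfold F. rewrite Rmax_right by lra.
      destruct (IHn s) as [D1 D2]. lra.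
      destruct (HL' s (pic (S n) s) (pic n s)) as [H1 H2]; try lra. apply pic_ok; lra. apply pic_ok; lra.
      split; auto. eapply Rle_trans. exact H2. apply Rmult_le_compat_l; lra.
      split. apply (summable_ext' _ _ (fun i j Hi => eq_sym (E i j Hi))). exact I1.
      rewrite (l1_ext' _ _ E). eapply Rle_trans. exact I2. eapply Rle_trans. exact X2.
      simpl. right. field. }
  exists (K0 * exp (2 * L * T)). split.
  apply Rmult_le_pos; auto. left; apply exp_pos.
  intros n t Ht. destruct (Claim n t Ht) as [H1 H2]. split; auto.
  eapply Rle_trans. exact H2.
  assert (exp (2 * L * t) <= exp (2 * L * T)) by (apply exp_mono; nra).
  assert (0 <= K0 * (/2)^n) by (apply Rmult_le_pos; auto; apply pow_le; lra).
  apply Rle_trans with (K0 * (/2)^n * exp (2 * L * T)). apply Rmult_le_compat_l; auto. right; ring.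
Qed.

Lemma ser_sum2 (a : nat -> nat -> nat -> R) N J : (forall i j, (i <= N)%nat -> ex_series (a i j)) ->
  Series (fun k => sum_f_R0 (fun i => sum_f_R0 (fun j => a i j k) J) N) =
  sum_f_R0 (fun i => sum_f_R0 (fun j => Series (a i j)) J) N.
Proof.
  intros H.
  assert (Inner : forall i, (i <= N)%nat -> ex_series (fun k => sum_f_R0 (fun j => a i j k) J) /\
     Series (fun k => sum_f_R0 (fun j => a i j k) J) = sum_f_R0 (fun j => Series (a i j)) J).
  { intros i Hi. apply (ser_sum (fun j k => a i j k) J). intros; apply H; auto. }
  destruct (ser_sum (fun i k => sum_f_R0 (fun j => a i j k) J) N) as [_ E].
  { intros; apply Inner; auto. }
  rewrite E. apply sum_eq. intros; apply Inner; auto.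
Qed.

Definition Pl t i j := P0 x0 y0 i j + Series (fun n => pic (S n) t i j - pic n t i j).

Lemma P_close T : 0 < T -> exists C, 0 <= C /\ forall n t, 0 <= t <= T ->
  summable M (fun i j => Pl t i j - pic n t i j) /\
  l1norm M (fun i j => Pl t i j - pic n t i j) <= 2 * C * (/2) ^ n.
Proof.
  intros HT. destruct (pic_est T HT) as [C [HC Hest]]. exists C. split; auto.
  intros n t Ht.
  set (D := fun i j k => pic (S k) t i j - pic k t i j).
  assert (HD : forall i j k, (i <= M)%nat -> Rabs (D i j k) <= C * (/2) ^ k).
  { intros i j k Hi. destruct (Hest k t Ht) as [H1 H2]. eapply Rle_trans; [|exact H2].
    apply (comp_le_l1 (fun i j => pic (S k) t i j - pic k t i j)); auto. }
  assert (HexA : forall i j m, (i <= M)%nat -> ex_series (fun k => Rabs (D i j (m + k)%nat))).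
  { intros i j m Hi. apply (exs_le _ (fun k => C * (/2) ^ (m + k))). intro k. rewrite Rabs_Rabsolu. apply HD; auto.
    apply geo_series; auto. }
  assert (E : forall i j, (i <= M)%nat -> Pl t i j - pic n t i j = Series (fun k => D i j (n + k)%nat)).
  { intros i j Hi. rewrite pic_tele. unfold Pl. rewrite (ser_shift _ n) by (apply exs_abs; apply (HexA i j 0%nat Hi)).
    unfold D. ring. }
  apply fam_bound. intro J.
  rewrite (sum_eq _ (fun i => sum_f_R0 (fun j => Rabs (Series (fun k => D i j (n + k)%nat))) J)).
  2: { intros i Hi. apply sum_eq. intros j _. rewrite E; auto. }
  apply Rle_trans with (sum_f_R0 (fun i => sum_f_R0 (fun j => Series (fun k => Rabs (D i j (n + k)%nat))) J) M).
  { apply sum_Rle; intros i Hi. apply sum_Rle; intros j _. apply Series_Rabs. apply HexA; auto. }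
  rewrite <- (ser_sum2 (fun i j k => Rabs (D i j (n + k)%nat))) by (intros; apply HexA; auto).
  destruct (geo_series C n HC) as [G1 G2]. rewrite <- G2.
  apply Series_le; auto. intro k. split.
  apply sum_nonneg; intros; apply sum_nonneg; intros; apply Rabs_pos.
  destruct (Hest (n + k)%nat t Ht) as [H1 H2]. eapply Rle_trans; [|exact H2].
  apply (fam_partial M (fun i j => pic (S (n + k)) t i j - pic (n + k) t i j) J H1).
Qed.

Lemma Pl_ok : path_ok Pl.
Proof.
  assert (Hs : forall s, 0 <= s -> summable M (Pl s)).
  { intros s Hs. destruct (P_close (s + 1)) as [C [_ HC]]. lra. destruct (HC 0%nat s) as [H1 _]. lra.
    apply (summable_ext M (fun i j => pic 0 s i j + (Pl s i j - pic 0 s i j))). intros; ring.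
    apply l1_triangle; auto. apply pic_ok; auto. }
  split; auto.
  intros t e He.
  set (T := Rabs t + 1).
  assert (HT : 0 < T) by (unfold T; assert (0 <= Rabs t) by apply Rabs_pos; lra).
  destruct (P_close T HT) as [C [HC HC']].
  destruct (pow_lt_1_zero (/2)) with (y := e / 3 / (2 * C + 1)) as [N HN].
  rewrite Rabs_right; lra. apply Rdiv_lt_0_compat; lra.
  specialize (HN N (Nat.le_refl N)). rewrite Rabs_right in HN by (apply Rle_ge, pow_le; lra).
  assert (HN' : 2 * C * (/2) ^ N < e / 3).
  { assert (0 <= (/2)^N) by (apply pow_le; lra).
    apply Rle_lt_trans with ((2 * C + 1) * (/2) ^ N). apply Rmult_le_compat_r; lra.
    apply Rlt_le_trans with ((2 * C + 1) * (e / 3 / (2 * C + 1))). apply Rmult_lt_compat_l; lra.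
    right; field; lra. }
  destruct (proj2 (pic_ok N) t (e / 3)) as [d [Hd Hd']]. lra.
  exists (Rmin 1 d). split. apply Rmin_pos; lra.
  intros s Hs'. assert (Hs1 : Rabs (s - t) < 1) by (eapply Rlt_le_trans; [exact Hs'|apply Rmin_l]).
  assert (Hs2 : Rabs (s - t) < d) by (eapply Rlt_le_trans; [exact Hs'|apply Rmin_r]).
  assert (Ht0 : 0 <= Rabs t) by apply Rabs_pos.
  assert (B1 : 0 <= Rmax 0 s <= T).
  { split. apply Rmax_l. assert (s - t <= Rabs (s - t)) by apply RRle_abs. assert (t <= Rabs t) by apply RRle_abs.
    unfold T, Rmax. destruct Rle_dec; lra. }
  assert (B2 : 0 <= Rmax 0 t <= T).
  { split. apply Rmax_l. assert (t <= Rabs t) by apply RRle_abs. unfold T, Rmax. destruct Rle_dec; lra. }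
  set (a := Rmax 0 s). set (b := Rmax 0 t). fold a b in B1, B2, Hd'.
  assert (Sa := Hs a (proj1 B1)). assert (Sb := Hs b (proj1 B2)).
  assert (Pa := proj1 (pic_ok N) a (proj1 B1)). assert (Pb := proj1 (pic_ok N) b (proj1 B2)).
  eapply Rle_lt_trans. apply (l1_tri3 (Pl a) (pic N a) (Pl b)); auto.
  eapply Rle_lt_trans. apply Rplus_le_compat_l. apply (l1_tri3 (pic N a) (pic N b) (Pl b)); auto.
  destruct (HC' N a B1) as [_ X1]. destruct (HC' N b B2) as [_ X2]. rewrite l1_sym in X2.
  specialize (Hd' s Hs2). fold a b in Hd'. lra.
Qed.

Lemma Pl_eq t i j : 0 <= t -> (i <= M)%nat -> is_RInt (fun s => G s (Pl s) i j) 0 t (Pl t i j - P0 x0 y0 i j).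
Proof.
  intros Ht Hi.
  assert (HT : 0 < t + 1) by lra.
  destruct (P_close (t + 1) HT) as [C [HC HC']]. destruct (lip_T (t + 1) HT) as [L [HL HL']].
  assert (Hex := path_int Pl 0 t i j Pl_ok (Rle_refl 0) Ht Hi).
  assert (Heq : Pl t i j - P0 x0 y0 i j = RInt (fun s => G s (Pl (Rmax 0 s)) i j) 0 t).
  { assert (Hz : forall n, Rabs (Pl t i j - P0 x0 y0 i j - RInt (fun s => G s (Pl (Rmax 0 s)) i j) 0 t)
       <= 0 + (2 * C + t * (L * (2 * C))) * (/2) ^ n).
    { intro n.
      assert (Hn : pic (S n) t i j = P0 x0 y0 i j + RInt (fun s => G s (pic n (Rmax 0 s)) i j) 0 t) by reflexivity.
      assert (Hexn := path_int (pic n) 0 t i j (pic_ok n) (Rle_refl 0) Ht Hi).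
      replace (Pl t i j - P0 x0 y0 i j - RInt (fun s => G s (Pl (Rmax 0 s)) i j) 0 t) with
        ((Pl t i j - pic (S n) t i j) + (RInt (fun s => G s (pic n (Rmax 0 s)) i j) 0 t - RInt (fun s => G s (Pl (Rmax 0 s)) i j) 0 t))
        by (rewrite Hn; ring).
      rewrite <- R_minus by auto.
      eapply Rle_trans. apply Rabs_triang. rewrite Rplus_0_l, Rmult_plus_distr_r. apply Rplus_le_compat.
      - destruct (HC' (S n) t) as [X1 X2]. lra.
        eapply Rle_trans. apply (comp_le_l1 (fun i j => Pl t i j - pic (S n) t i j)); auto.
        eapply Rle_trans. exact X2. simpl. assert (0 <= (/2)^n) by (apply pow_le; lra). nra.
      - replace (t * (L * (2 * C)) * (/2) ^ n) with ((t - 0) * (L * (2 * C * (/2) ^ n))) by ring.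
        apply abs_RInt_le_const; auto. apply exR_minus; auto.
        intros s Hs. rewrite Rmax_right by lra.
        destruct (HL' s (pic n s) (Pl s)) as [Y1 Y2]. lra. apply pic_ok; lra. apply Pl_ok; lra.
        eapply Rle_trans. apply (comp_le_l1 (fun i j => G s (pic n s) i j - G s (Pl s) i j)); auto.
        eapply Rle_trans. exact Y2. apply Rmult_le_compat_l. lra. rewrite l1_sym.
        apply HC'. lra. }
    assert (HH : Rabs (Pl t i j - P0 x0 y0 i j - RInt (fun s => G s (Pl (Rmax 0 s)) i j) 0 t) <= 0).
    { apply (geo_zero _ _ (2 * C + t * (L * (2 * C)))). assert (0 <= t * (L * (2 * C))) by (apply Rmult_le_pos; nra). lra.
      exact Hz. }
    assert (H0 := Rabs_pos (Pl t i j - P0 x0 y0 i j - RInt (fun s => G s (Pl (Rmax 0 s)) i j) 0 t)).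
    assert (Rabs (Pl t i j - P0 x0 y0 i j - RInt (fun s => G s (Pl (Rmax 0 s)) i j) 0 t) = 0) by lra.
    apply Rabs_eq_0 in H. lra. }
  rewrite Heq. apply (is_RInt_ext (fun s => G s (Pl (Rmax 0 s)) i j)).
  intros s Hs. rewrite Rmin_left, Rmax_right in Hs by lra. rewrite Rmax_right by lra. reflexivity.
  exact (RInt_correct _ _ _ Hex).
Qed.

Lemma l1c_minus (y z : R -> rfamily) t : (forall s, summable M (y s)) -> (forall s, summable M (z s)) ->
  l1c y t -> l1c z t -> l1c (fun s i j => y s i j - z s i j) t.
Proof.
  intros Sy Sz Hy Hz e He. destruct (Hy (e/2)) as [d1 [Hd1 H1]]. lra. destruct (Hz (e/2)) as [d2 [Hd2 H2]]. lra.
  exists (Rmin d1 d2). split. apply Rmin_pos; auto. intros s Hs.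
  assert (A1 : Rabs (s - t) < d1) by (eapply Rlt_le_trans; [exact Hs|apply Rmin_l]).
  assert (A2 : Rabs (s - t) < d2) by (eapply Rlt_le_trans; [exact Hs|apply Rmin_r]).
  destruct (l1_triangle M (fun i j => y s i j - y t i j) (fun i j => z t i j - z s i j)) as [_ X];
    try apply summable_minus; auto.
  rewrite (l1_ext M _ (fun i j => (y s i j - z s i j) - (y t i j - z t i j))) in X by (intros; ring).
  rewrite (l1_sym (z t)) in X. specialize (H1 s A1). specialize (H2 s A2). lra.
Qed.

Lemma cont_of_l1c (Y : R -> rfamily) t : (forall s, summable M (Y s)) -> l1c Y t -> continuous (fun s => l1norm M (Y s)) t.
Proof. intros H1 H2. apply continuity_pt_filterlim. apply l1c_cont; auto. Qed.

Lemma uniq (Q : R -> rfamily) : path_ok Q ->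
  (forall t i j, 0 <= t -> (i <= M)%nat -> is_RInt (fun s => G s (Q s) i j) 0 t (Q t i j - P0 x0 y0 i j)) ->
  forall t i j, 0 <= t -> (i <= M)%nat -> Q t i j = Pl t i j.
Proof.
  intros HQ HQi t0 i0 j0 Ht0 Hi0.
  set (T := t0 + 1). assert (HT : 0 < T) by (unfold T; lra).
  destruct (lip_T T HT) as [L [HL HL']].
  set (Y := fun s i j => Q (Rmax 0 s) i j - Pl (Rmax 0 s) i j).
  assert (SY : forall s, summable M (Y s)).
  { intro s. apply summable_minus. apply path_ok_cut; auto. apply path_ok_cut; apply Pl_ok. }
  assert (CY : forall s, l1c Y s).
  { intro s. apply l1c_minus. apply path_ok_cut; auto. apply path_ok_cut; apply Pl_ok. apply HQ. apply Pl_ok. }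
  set (d := fun s => l1norm M (Y s)).
  assert (Dc : forall s, continuous d s) by (intro s; apply cont_of_l1c; auto).
  assert (Dex : forall a b, ex_RInt (fun s => L * d s) a b) by (intros; apply exR_scal; apply ex_RInt_cont; auto).
  destruct (l1c_bounded Y T) as [K [HK HK']]; auto. lra.
  assert (Key : forall t, 0 <= t <= T -> d t <= RInt (fun s => L * d s) 0 t).
  { intros t Ht.
    set (F := fun s (i j : nat) => G s (Q s) i j - G s (Pl s) i j).
    assert (E : forall i j, (i <= M)%nat -> Y t i j = RInt (fun s => F s i j) 0 t).
    { intros i j Hi. unfold Y, F. rewrite Rmax_right by lra. rewrite R_minus.
      rewrite (is_RInt_unique _ _ _ _ (HQi t i j (proj1 Ht) Hi)).
      rewrite (is_RInt_unique _ _ _ _ (Pl_eq t i j (proj1 Ht) Hi)). ring.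
      eexists; apply HQi; auto; lra. eexists; apply Pl_eq; auto; lra. }
    destruct (int_l1 M F (fun s => L * d s) 0 t) as [_ I2]; try lra.
    - intros i j Hi. apply exR_minus. eexists; apply HQi; auto; lra. eexists; apply Pl_eq; auto; lra.
    - apply Dex.
    - intros s Hs. unfold F, d, Y. rewrite Rmax_right by lra. apply HL'. lra. apply HQ; lra. apply Pl_ok; lra.
    - unfold d. rewrite (l1_ext' _ _ E). exact I2. }
  assert (Gr : forall n t, 0 <= t <= T -> d t <= K * (/2) ^ n * exp (2 * L * t)).
  { induction n; intros t Ht.
    - simpl. rewrite Rmult_1_r. assert (1 <= exp (2 * L * t)) by (rewrite <- exp_0; apply exp_mono; nra).
      assert (d t <= K). { unfold d. rewrite <- (Rmax_right 0 t) at 1 by lra. apply HK'. 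
        split; [apply Rmax_l|]. unfold Rmax; destruct Rle_dec; lra. }
      nra.
    - eapply Rle_trans. apply Key; auto.
      destruct (exp_step L (K * (/2) ^ n) t HL) as [X1 X2]. apply Rmult_le_pos; auto; apply pow_le; lra. lra.
      eapply Rle_trans. apply RInt_le; try lra. apply Dex. exact X1.
      intros s Hs. apply Rmult_le_compat_l. lra. apply IHn. lra.
      eapply Rle_trans. exact X2. simpl. right; field. }
  assert (Hd0 : d t0 <= 0).
  { apply (geo_zero _ _ (K * exp (2 * L * T))). apply Rmult_le_pos; auto. left; apply exp_pos.
    intro n. rewrite Rplus_0_l. eapply Rle_trans. apply (Gr n t0). unfold T; lra.
    assert (exp (2 * L * t0) <= exp (2 * L * T)) by (apply exp_mono; unfold T; nra).
    assert (0 <= K * (/2)^n) by (apply Rmult_le_pos; auto; apply pow_le; lra).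
    apply Rle_trans with (K * (/2)^n * exp (2 * L * T)). apply Rmult_le_compat_l; auto. right; ring. }
  assert (H := comp_le_l1 (Y t0) i0 j0 (SY t0) Hi0).
  assert (EY : Y t0 i0 j0 = Q t0 i0 j0 - Pl t0 i0 j0) by (unfold Y; rewrite Rmax_right by lra; reflexivity).
  rewrite EY in H. unfold d in Hd0.
  assert (Rabs (Q t0 i0 j0 - Pl t0 i0 j0) = 0). { assert (0 <= Rabs (Q t0 i0 j0 - Pl t0 i0 j0)) by apply Rabs_pos. lra. }
  apply Rabs_eq_0 in H0. lra.
Qed.

Lemma G_sign s (y : rfamily) i j : 0 <= s -> summable M y -> (i <= M)%nat -> y i j <= 0 -> 0 <= G s y i j.
Proof.
  intros Hs Hy Hi Hyij.
  assert (Hx : ppos y i j = 0) by (unfold Defs.pos; apply Rmax_right; auto).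
  rewrite G_decomp.
  assert (Hfr : frac f (ppos y) i j = 0).
  { rewrite frac_eq. rewrite Hx; ring. intros; apply pos_nonneg. apply pos_sm; apply Hy; auto. }
  rewrite Hfr, Rmult_0_r, Rmult_0_r, Rminus_0_r.
  apply Rplus_le_le_0_compat.
  - apply ser_ge0. intro k. destruct (Nat.eq_dec k j) as [->|Hne]. rewrite Hx; lra.
    apply Rmult_le_pos. apply Hoff; auto. apply pos_nonneg.
    apply exs_abs. apply A_ex; auto. apply pos_sm; apply Hy; auto.
  - apply Rmult_le_pos. destruct (1 <=? i)%nat. apply Hlam0; auto; lia. lra.
    apply Rmult_le_pos. destruct (Hf (INR j)); lra.
    assert (Hrow' : sm (ppos y (i - 1)%nat)) by (apply pos_sm; apply Hy; lia).
    rewrite frac_eq; auto. apply Rmult_le_pos. apply pos_nonneg.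
    destruct (row_SF _ (fun l => pos_nonneg y (i-1)%nat l) Hrow') as [_ [_ [A1 [A2 A3]]]].
    apply (ratio_facts _ _ A1 A2 A3). intros; apply pos_nonneg.
Qed.

Lemma Pl_diff s s' i j : 0 <= s' -> 0 <= s -> (i <= M)%nat ->
  Pl s i j - Pl s' i j = RInt (fun u => G u (Pl u) i j) s' s.
Proof.
  intros H1 H2 Hi.
  assert (E1 : ex_RInt (fun u => G u (Pl u) i j) 0 s') by (eexists; apply Pl_eq; auto).
  assert (E2 : ex_RInt (fun u => G u (Pl u) i j) 0 s) by (eexists; apply Pl_eq; auto).
  rewrite <- int_diff with (a := 0); auto.
  rewrite (is_RInt_unique _ _ _ _ (Pl_eq s i j H2 Hi)), (is_RInt_unique _ _ _ _ (Pl_eq s' i j H1 Hi)). ring.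
  apply ex_RInt_Chasles with 0; auto. apply ex_RInt_swap; auto.
Qed.

Lemma Pl_comp_cont t i j : 0 <= t -> (i <= M)%nat -> forall e, 0 < e -> exists d, 0 < d /\
  forall s, 0 <= s -> Rabs (s - t) < d -> Rabs (Pl s i j - Pl t i j) < e.
Proof.
  intros Ht Hi e He. destruct (proj2 Pl_ok t e He) as [d [Hd Hd']]. exists d. split; auto.
  intros s Hs Hst. specialize (Hd' s Hst). rewrite !Rmax_right in Hd' by lra.
  eapply Rle_lt_trans; [|exact Hd']. apply (comp_le_l1 (fun i j => Pl s i j - Pl t i j)); auto.
  apply summable_minus; apply Pl_ok; auto.
Qed.

Lemma Pl_nonneg t i j : 0 <= t -> (i <= M)%nat -> 0 <= Pl t i j.
Proof.
  intros Ht Hi. destruct (Rle_or_lt 0 (Pl t i j)) as [|Hneg]; auto. exfalso.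
  assert (HP00 : 0 <= Pl 0 i j).
  { assert (H0 := Pl_eq 0 i j (Rle_refl 0) Hi). pose proof (is_RInt_unique _ _ _ _ H0) as H. rewrite RInt_point in H.
    unfold zero in H; simpl in H. assert (0 <= P0 x0 y0 i j) by apply P0_nonneg. lra. }
  set (E := fun s => 0 <= s <= t /\ 0 <= Pl s i j).
  assert (E0 : E 0) by (split; [lra|auto]).
  assert (Hbd : bound E). { exists t. intros x [Hx _]. lra. }
  destruct (completeness E Hbd (ex_intro _ 0 E0)) as [c [Hub Hlub]].
  assert (Hc0 : 0 <= c) by (apply Hub; exact E0).
  assert (Hct : c <= t). { apply Hlub. intros x [Hx _]. lra. }
  assert (Hcpos : 0 <= Pl c i j).
  { destruct (Rle_or_lt 0 (Pl c i j)) as [|Hn]; auto. exfalso.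
    destruct (Pl_comp_cont c i j Hc0 Hi (- Pl c i j)) as [d [Hd Hd']]. lra.
    destruct (classic (exists x, E x /\ c - d < x)) as [[x [Ex Hx]]|Hno].
    - assert (x <= c) by (apply Hub; exact Ex). destruct Ex as [Ex1 Ex2].
      assert (Rabs (Pl x i j - Pl c i j) < - Pl c i j). apply Hd'. lra. rewrite Rabs_left1; lra.
      revert H0. unfold Rabs. destruct Rcase_abs; lra.
    - assert (c <= c - d). { apply Hlub. intros y Ey. destruct (Rle_or_lt y (c - d)); auto. exfalso; apply Hno; exists y; auto. }
      lra. }
  assert (Hct' : c < t). { destruct (Req_dec c t) as [->|]; [lra|lra]. }
  assert (Hneg' : forall s, c < s <= t -> Pl s i j < 0).
  { intros s Hs. destruct (Rle_or_lt 0 (Pl s i j)) as [H|H]; auto. assert (s <= c) by (apply Hub; split; [lra|auto]). lra. }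
  assert (Hge : 0 <= RInt (fun u => G u (Pl u) i j) c t).
  { apply RInt_ge_0. lra.
    apply ex_RInt_Chasles with 0. apply ex_RInt_swap. eexists; apply Pl_eq; auto. eexists; apply Pl_eq; auto; lra.
    intros s Hs. apply G_sign; auto. lra. apply Pl_ok; lra. left; apply Hneg'; lra. }
  rewrite <- Pl_diff in Hge; auto; lra.
Qed.

Hypothesis HM : (1 <= M)%nat.

Lemma telesc (g lamc : nat -> R) :
  sum_f_R0 (fun i => (if (1 <=? i)%nat then lamc (i-1)%nat else 0) * g (i-1)%nat) M =
  sum_f_R0 (fun i => (if (i <=? M-1)%nat then lamc i else 0) * g i) M.
Proof.
  destruct M as [|M']. lia.
  rewrite decomp_sum by lia. rewrite tech5. simpl pred.
  replace (S M' - 1)%nat with M' by lia.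
  rewrite (proj2 (Nat.leb_nle (S M') M')) by lia.
  simpl (1 <=? 0)%nat. rewrite Rmult_0_l, Rplus_0_l, Rmult_0_l, Rplus_0_r.
  apply sum_eq. intros i Hi. rewrite (proj2 (Nat.leb_le i M')) by lia.
  replace (S i - 1)%nat with i by lia. simpl (1 <=? S i)%nat. reflexivity.
Qed.

Lemma sum_pqr (p q r : nat -> R) N : sum_f_R0 (fun j => p j + q j - r j) N = sum_f_R0 p N + sum_f_R0 q N - sum_f_R0 r N.
Proof. induction N; simpl; [|rewrite IHN]; ring. Qed.

Definition cmu i k J := sum_f_R0 (fun j => mu i k j) J.

Definition theta (y : rfamily) J := sum_f_R0 (fun i => Series (fun k => ppos y i k * cmu i k J)) M.

Lemma cmu_bound i k J : (i <= M)%nat -> Rabs (cmu i k J) <= 2 * Bmu.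
Proof. intros Hi. unfold cmu. eapply Rle_trans. apply Rsum_abs. apply mu_row_partial; auto. Qed.

Lemma theta_ex (y : rfamily) i J : summable M y -> (i <= M)%nat ->
  ex_series (fun k => Rabs (ppos y i k * cmu i k J)).
Proof.
  intros Hy Hi. apply (exs_le _ (fun k => 2 * Bmu * Rabs (ppos y i k))).
  intro k. rewrite Rabs_Rabsolu, Rabs_mult, Rmult_comm. apply Rmult_le_compat_r. apply Rabs_pos. apply cmu_bound; auto.
  apply exs_scal. apply pos_sm. apply Hy; auto.
Qed.

Lemma G_sum_theta s (y : rfamily) J : summable M y ->
  sum_f_R0 (fun i => sum_f_R0 (fun j => G s y i j) J) M = theta y J.
Proof.
  intros Hy.
  set (a := fun k => sum_f_R0 (fun j => f (INR j) * frac f (ppos y) k j) J).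
  assert (E : forall i, (i <= M)%nat -> sum_f_R0 (fun j => G s y i j) J =
     Series (fun k => ppos y i k * cmu i k J)
     + (if (1 <=? i)%nat then lam s (i-1)%nat else 0) * a (i-1)%nat
     - (if (i <=? M-1)%nat then lam s i else 0) * a i).
  { intros i Hi. transitivity (sum_f_R0 (fun j => Series (fun k => mu i k j * ppos y i k)
       + (if (1 <=? i)%nat then lam s (i-1)%nat else 0) * (f (INR j) * frac f (ppos y) (i-1)%nat j)
       - (if (i <=? M-1)%nat then lam s i else 0) * (f (INR j) * frac f (ppos y) i j)) J).
    apply sum_eq; intros; apply G_decomp.
    rewrite sum_pqr.
    unfold a. rewrite !sum_scal_l. f_equal. f_equal.
    destruct (ser_sum (fun j k => mu i k j * ppos y i k) J) as [_ HS].
    { intros. apply exs_abs, A_ex; auto. apply pos_sm; apply Hy; auto. }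
    rewrite <- HS. apply Series_ext. intro k. unfold cmu. rewrite Rmult_comm, <- sum_scal_r. reflexivity. }
  rewrite (sum_eq _ _ M E). rewrite sum_pqr.
  rewrite (telesc a (lam s)). unfold theta. ring.
Qed.

Lemma dom_ser (x : nat -> R) (c : nat -> nat -> R) B : sm x -> 0 <= B -> (forall J k, Rabs (c J k) <= B) ->
  (forall k, is_lim_seq (fun J => c J k) 0) -> is_lim_seq (fun J => Series (fun k => x k * c J k)) 0.
Proof.
  intros Hx HB Hc Hl. apply is_lim_seq_Reals. intros e He.
  set (eta := e / 2).
  assert (Heta : 0 < eta) by (unfold eta; lra).
  assert (Hn0 : 0 <= nrm x) by (apply nrm_ge0; auto).
  assert (Ht := ser_lim _ Hx). apply is_lim_seq_Reals in Ht.
  destruct (Ht (eta / (B + 1))) as [K HK]. apply Rdiv_lt_0_compat; lra.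
  specialize (HK K (Nat.le_refl K)). unfold R_dist in HK.
  set (eta' := eta / (nrm x + 1)).
  assert (Heta' : 0 < eta') by (unfold eta'; apply Rdiv_lt_0_compat; lra).
  assert (Fin : forall K', exists N, forall J k, (N <= J)%nat -> (k <= K')%nat -> Rabs (c J k) < eta').
  { induction K'.
    - destruct (proj1 (is_lim_seq_Reals _ _) (Hl 0%nat) eta' Heta') as [N HN]. exists N.
      intros J k HJ Hk. replace k with 0%nat by lia. specialize (HN J HJ). unfold R_dist in HN. rewrite Rminus_0_r in HN. exact HN.
    - destruct IHK' as [N1 HN1].
      destruct (proj1 (is_lim_seq_Reals _ _) (Hl (S K')) eta' Heta') as [N2 HN2]. exists (Nat.max N1 N2).
      intros J k HJ Hk. destruct (Nat.eq_dec k (S K')) as [->|Hne].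
      specialize (HN2 J ltac:(lia)). unfold R_dist in HN2. rewrite Rminus_0_r in HN2. exact HN2.
      apply HN1; lia. }
  destruct (Fin K) as [N HN]. exists N. intros J HJ. unfold R_dist. rewrite Rminus_0_r.
  assert (Exc : ex_series (fun k => Rabs (x k * c J k))).
  { apply (exs_le _ (fun k => B * Rabs (x k))). intro k. rewrite Rabs_Rabsolu, Rabs_mult, Rmult_comm.
    apply Rmult_le_compat_r. apply Rabs_pos. auto. apply exs_scal; auto. }
  eapply Rle_lt_trans. apply Series_Rabs; auto.
  rewrite (Series_incr_n _ (S K)) by (auto; lia). simpl pred.
  rewrite (Series_incr_n (fun k => Rabs (x k)) (S K)) in HK by (auto; lia). simpl pred in HK.
  assert (T1 : sum_f_R0 (fun k => Rabs (x k * c J k)) K <= eta' * nrm x).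
  { apply Rle_trans with (sum_f_R0 (fun k => eta' * Rabs (x k)) K).
    apply sum_Rle. intros k Hk. rewrite Rabs_mult, Rmult_comm. apply Rmult_le_compat_r. apply Rabs_pos.
    left; apply HN; auto.
    rewrite sum_scal_l. apply Rmult_le_compat_l. lra. apply row_partial; auto. }
  assert (T2 : Series (fun k => Rabs (x (S K + k)%nat * c J (S K + k)%nat)) <= B * Series (fun k => Rabs (x (S K + k)%nat))).
  { rewrite <- Series_scal_l. apply Series_le. intro k. split. apply Rabs_pos. rewrite Rabs_mult, Rmult_comm.
    apply Rmult_le_compat_r. apply Rabs_pos. auto.
    apply exs_scal. apply (ex_series_incr_n (fun k => Rabs (x k)) (S K)). auto. }
  assert (T3 : 0 <= Series (fun k => Rabs (x (S K + k)%nat))).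
  { apply ser_ge0. intros; apply Rabs_pos. apply (ex_series_incr_n (fun k => Rabs (x k)) (S K)). auto. }
  assert (T4 : Series (fun k => Rabs (x (S K + k)%nat)) < eta / (B + 1)).
  { revert HK. rewrite Rabs_left1. intro; lra.
    assert (0 <= sum_f_R0 (fun k => Rabs (x k)) K) by (apply sum_nonneg; intros; apply Rabs_pos). lra. }
  assert (T5 : B * Series (fun k => Rabs (x (S K + k)%nat)) <= eta).
  { apply Rle_trans with ((B + 1) * (eta / (B + 1))). apply Rmult_le_compat; lra.
    right; field; lra. }
  assert (T6 : eta' * nrm x < eta).
  { unfold eta'. apply Rle_lt_trans with (eta / (nrm x + 1) * (nrm x + 1) - eta / (nrm x + 1)).
    right; ring. replace (eta / (nrm x + 1) * (nrm x + 1)) with eta by (field; lra).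
    assert (0 < eta / (nrm x + 1)) by (apply Rdiv_lt_0_compat; lra). lra. }
  unfold eta in *. lra.
Qed.

Lemma lim_sum_fin (a : nat -> nat -> R) N : (forall i, (i <= N)%nat -> is_lim_seq (a i) 0) ->
  is_lim_seq (fun J => sum_f_R0 (fun i => a i J) N) 0.
Proof.
  intros H. induction N; simpl.
  - apply H; lia.
  - replace 0 with (0 + 0) by ring. apply is_lim_seq_plus'. apply IHN; intros; apply H; lia. apply H; lia.
Qed.

Lemma theta_lim (y : rfamily) : summable M y -> is_lim_seq (fun J => theta y J) 0.
Proof.
  intros Hy. unfold theta. apply (lim_sum_fin (fun i J => Series (fun k => ppos y i k * cmu i k J))).
  intros i Hi. apply (dom_ser (ppos y i) (fun J k => cmu i k J) (2 * Bmu)).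
  apply pos_sm; apply Hy; auto. assert (H := Bmu_ge0); lra.
  intros; apply cmu_bound; auto.
  intro k. unfold cmu. apply is_lim_seq_Reals. apply is_series_Reals. apply Hrow; auto.
Qed.

Lemma theta_lip (y z : rfamily) J : summable M y -> summable M z ->
  Rabs (theta y J - theta z J) <= INR (S M) * (2 * Bmu) * l1norm M (fun i j => y i j - z i j).
Proof.
  intros Hy Hz. unfold theta.
  assert (E : forall i, (i <= M)%nat -> Series (fun k => ppos y i k * cmu i k J) - Series (fun k => ppos z i k * cmu i k J)
     = Series (fun k => (ppos y i k - ppos z i k) * cmu i k J)).
  { intros i Hi. rewrite <- Series_minus. apply Series_ext; intro; ring.
    apply exs_abs, theta_ex; auto. apply exs_abs, theta_ex; auto. }
  rewrite <- sum_minus'. rewrite (sum_eq _ _ M E).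
  eapply Rle_trans. apply Rsum_abs.
  apply Rle_trans with (sum_f_R0 (fun _ => 2 * Bmu * l1norm M (fun i j => y i j - z i j)) M).
  2: { rewrite sum_cte. right; ring. }
  apply sum_Rle. intros i Hi.
  destruct (pos_nrm y z i) as [P1 P2]; try apply Hy; try apply Hz; auto.
  assert (Hd := row_le_l1 M (fun i j => y i j - z i j) i (summable_minus M y z Hy Hz) Hi).
  assert (Ex : ex_series (fun k => Rabs ((ppos y i k - ppos z i k) * cmu i k J))).
  { apply (exs_le _ (fun k => 2 * Bmu * Rabs (ppos y i k - ppos z i k))). intro k. rewrite Rabs_Rabsolu, Rabs_mult, Rmult_comm.
    apply Rmult_le_compat_r. apply Rabs_pos. apply cmu_bound; auto. apply exs_scal; exact P1. }
  eapply Rle_trans. apply Series_Rabs; auto.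
  apply Rle_trans with (Series (fun k => 2 * Bmu * Rabs (ppos y i k - ppos z i k))).
  apply Series_le. intro k. split. apply Rabs_pos. rewrite Rabs_mult, Rmult_comm.
  apply Rmult_le_compat_r. apply Rabs_pos. apply cmu_bound; auto. apply exs_scal; exact P1.
  rewrite Series_scal_l. apply Rmult_le_compat_l. assert (H := Bmu_ge0); lra.
  eapply Rle_trans. exact P2. exact Hd.
Qed.

Lemma Pl_lip T : 0 < T -> exists K, 0 <= K /\ forall s s', 0 <= s <= T -> 0 <= s' <= T ->
  l1norm M (fun i j => Pl s i j - Pl s' i j) <= K * Rabs (s - s').
Proof.
  intros HT. destruct (path_Gbound Pl T HT Pl_ok) as [K [HK HK']]. exists K. split; auto.
  assert (Main : forall s s', 0 <= s' <= s -> s <= T -> l1norm M (fun i j => Pl s i j - Pl s' i j) <= K * Rabs (s - s')).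
  { intros s s' Hss HsT.
    destruct (int_l1 M (fun u => G u (Pl u)) (fun _ => K) s' s) as [_ I2]; try lra.
    - intros i j Hi. apply ex_RInt_Chasles with 0. apply ex_RInt_swap. eexists; apply Pl_eq; auto; lra.
      eexists; apply Pl_eq; auto; lra.
    - apply exR_const.
    - intros u Hu. destruct (HK' u) as [A1 A2]. lra. rewrite Rmax_right in A1, A2 by lra. auto.
    - rewrite (l1_ext' _ (fun i j => RInt (fun u => G u (Pl u) i j) s' s)).
      rewrite R_const in I2. rewrite Rabs_right by lra. lra.
      intros i j Hi. apply Pl_diff; auto; lra. }
  intros s s' Hs Hs'. destruct (Rle_or_lt s' s). apply Main; lra.
  rewrite l1_sym, Rabs_minus_sym. apply Main; lra.
Qed.

Lemma grid_cover a d s n : 0 < d -> a <= s <= a + INR n * d -> exists m, (m <= n)%nat /\ a + INR m * d <= s <= a + INR m * d + d.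
Proof.
  intros Hd. revert s. induction n; intros s Hs.
  - exists 0%nat. simpl in *. split. lia. lra.
  - destruct (Rle_or_lt s (a + INR n * d)).
    + destruct (IHn s) as [m [Hm Hm']]. lra. exists m. split. lia. auto.
    + exists n. split. lia. rewrite S_INR in Hs. lra.
Qed.

Lemma grid_unif (th : nat -> R -> R) a b Lam : a <= b -> 0 <= Lam ->
  (forall J s s', a <= s <= b -> a <= s' <= b -> Rabs (th J s - th J s') <= Lam * Rabs (s - s')) ->
  (forall s, a <= s <= b -> is_lim_seq (fun J => th J s) 0) ->
  forall e, 0 < e -> exists N, forall J, (N <= J)%nat -> forall s, a <= s <= b -> Rabs (th J s) <= e.
Proof.
  intros Hab HL Hlip Hlim e He.
  set (d := e / (2 * (Lam + 1))).
  assert (Hd : 0 < d) by (unfold d; apply Rdiv_lt_0_compat; lra).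
  destruct (nfloor_ex ((b - a) / d)) as [n [_ Hn]]. apply Rdiv_le_0_compat; lra.
  assert (Hcov : b <= a + INR (S n) * d).
  { rewrite S_INR. apply (Rmult_lt_compat_r d) in Hn; auto. unfold Rdiv in Hn. rewrite Rmult_assoc, Rinv_l in Hn by lra. lra. }
  set (g := fun m => a + INR m * d).
  assert (Fin : forall n', exists N, forall J m, (N <= J)%nat -> (m <= n')%nat -> g m <= b -> Rabs (th J (g m)) <= e / 2).
  { induction n'.
    - destruct (Rle_or_lt (g 0%nat) b) as [Hg|Hg].
      + destruct (proj1 (is_lim_seq_Reals _ _) (Hlim (g 0%nat) ltac:(unfold g; simpl; lra)) (e/2)) as [N HN]. lra.
        exists N. intros J m HJ Hm Hgm. replace m with 0%nat by lia. specialize (HN J HJ). unfold R_dist in HN.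
        rewrite Rminus_0_r in HN. lra.
      + exists 0%nat. intros J m HJ Hm Hgm. replace m with 0%nat in Hgm by lia. lra.
    - destruct IHn' as [N1 HN1].
      destruct (Rle_or_lt (g (S n')) b) as [Hg|Hg].
      + assert (Hga : a <= g (S n')) by (unfold g; assert (0 <= INR (S n')) by apply pos_INR; nra).
        destruct (proj1 (is_lim_seq_Reals _ _) (Hlim (g (S n')) ltac:(lra)) (e/2)) as [N2 HN2]. lra.
        exists (Nat.max N1 N2). intros J m HJ Hm Hgm. destruct (Nat.eq_dec m (S n')) as [->|Hne].
        specialize (HN2 J ltac:(lia)). unfold R_dist in HN2. rewrite Rminus_0_r in HN2. lra.
        apply HN1; auto; lia.
      + exists N1. intros J m HJ Hm Hgm. destruct (Nat.eq_dec m (S n')) as [->|Hne]. lra. apply HN1; auto; lia. }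
  destruct (Fin (S n)) as [N HN]. exists N. intros J HJ s Hs.
  destruct (grid_cover a d s (S n) Hd) as [m [Hm Hm']]. lra.
  assert (Hgm : a <= g m <= b) by (unfold g; assert (0 <= INR m) by apply pos_INR; split; nra).
  assert (A1 := HN J m HJ Hm (proj2 Hgm)).
  assert (A2 := Hlip J s (g m) Hs Hgm).
  assert (A3 : Lam * Rabs (s - g m) <= e / 2).
  { apply Rle_trans with ((Lam + 1) * d). apply Rmult_le_compat; try lra. apply Rabs_pos.
    unfold g in *. rewrite Rabs_right; lra. unfold d. right; field; lra. }
  assert (Rabs (th J s) <= Rabs (th J s - th J (g m)) + Rabs (th J (g m))).
  { replace (th J s) with ((th J s - th J (g m)) + th J (g m)) at 1 by ring. apply Rabs_triang. }
  lra.
Qed.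

Lemma Pl_mass t : 0 <= t -> l1norm M (Pl t) = 1.
Proof.
  intros Ht.
  set (Ssum := fun J => sum_f_R0 (fun i => sum_f_R0 (fun j => Pl t i j) J) M).
  assert (HT : 0 < t + 1) by lra.
  destruct (Pl_lip (t + 1) HT) as [K [HK HK']].
  set (th := fun J s => theta (Pl (Rmax 0 s)) J).
  assert (Hth : forall J, ex_RInt (th J) 0 t /\ Ssum J = (if (y0 <=? J)%nat then 1 else 0) + RInt (th J) 0 t).
  { intro J.
    assert (E1 : forall i j, (i <= M)%nat -> Pl t i j = P0 x0 y0 i j + RInt (fun u => G u (Pl u) i j) 0 t).
    { intros i j Hi. rewrite (is_RInt_unique _ _ _ _ (Pl_eq t i j Ht Hi)). ring. }
    assert (Ei : forall i, (i <= M)%nat -> ex_RInt (fun u => sum_f_R0 (fun j => G u (Pl u) i j) J) 0 t /\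
       RInt (fun u => sum_f_R0 (fun j => G u (Pl u) i j) J) 0 t = sum_f_R0 (fun j => RInt (fun u => G u (Pl u) i j) 0 t) J).
    { intros i Hi. apply (RInt_sum (fun j u => G u (Pl u) i j)). intros; eexists; apply Pl_eq; auto. }
    destruct (RInt_sum (fun i u => sum_f_R0 (fun j => G u (Pl u) i j) J) 0 t M) as [E2 E3].
    { intros; apply Ei; auto. }
    assert (Eth : forall u, 0 < u < t -> sum_f_R0 (fun i => sum_f_R0 (fun j => G u (Pl u) i j) J) M = th J u).
    { intros u Hu. unfold th. rewrite Rmax_right by lra. apply G_sum_theta. apply Pl_ok; lra. }
    split.
    - eapply ex_RInt_ext; [|exact E2]. intros u Hu. rewrite Rmin_left, Rmax_right in Hu by lra. exact (Eth u Hu).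
    - rewrite <- P0_partial. unfold Ssum.
      rewrite (RInt_ext (th J) (fun u => sum_f_R0 (fun i => sum_f_R0 (fun j => G u (Pl u) i j) J) M)).
      2: { intros u Hu. rewrite Rmin_left, Rmax_right in Hu by lra. symmetry; exact (Eth u Hu). }
      rewrite E3. rewrite <- sum_plus. apply sum_eq. intros i Hi. rewrite (proj2 (Ei i Hi)). rewrite <- sum_plus.
      apply sum_eq. intros j _. cbv beta. exact (E1 i j Hi). }
  assert (Hlim : is_lim_seq Ssum 1).
  { apply is_lim_seq_Reals. intros e He.
    assert (Hlip : forall J s s', 0 <= s <= t -> 0 <= s' <= t ->
      Rabs (th J s - th J s') <= INR (S M) * (2 * Bmu) * K * Rabs (s - s')).
    { intros J s s' Hs Hs'. unfold th. rewrite !Rmax_right by lra.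
      eapply Rle_trans. apply theta_lip; apply Pl_ok; lra.
      apply Rle_trans with (INR (S M) * (2 * Bmu) * (K * Rabs (s - s'))).
      apply Rmult_le_compat_l. apply Rmult_le_pos. apply pos_INR. assert (H := Bmu_ge0); lra.
      apply HK'; lra. right; ring. }
    assert (Hpt : forall s, 0 <= s <= t -> is_lim_seq (fun J => th J s) 0).
    { intros s Hs. unfold th. apply theta_lim. apply Pl_ok. apply Rmax_l. }
    assert (HL0 : 0 <= INR (S M) * (2 * Bmu) * K).
    { apply Rmult_le_pos; auto. apply Rmult_le_pos. apply pos_INR. assert (H := Bmu_ge0); lra. }
    assert (He' : 0 < e / (t + 1)) by (apply Rdiv_lt_0_compat; lra).
    destruct (grid_unif th 0 t _ Ht HL0 Hlip Hpt (e / (t + 1)) He') as [N HN].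
    exists (Nat.max N y0). intros J HJ. unfold R_dist. destruct (Hth J) as [X1 X2]. rewrite X2.
    rewrite (proj2 (Nat.leb_le y0 J)) by lia.
    unfold Rminus at 1. rewrite Rplus_comm, <- Rplus_assoc, Rplus_opp_l, Rplus_0_l.
    assert (HJN : (N <= J)%nat) by lia.
    eapply Rle_lt_trans. apply (abs_RInt_le_const _ 0 t (e / (t + 1)) Ht X1). intros s Hs. apply (HN J HJN s Hs).
    rewrite Rminus_0_r. apply Rle_lt_trans with ((t + 1) * (e / (t + 1)) - e / (t + 1)).
    right; ring. replace ((t + 1) * (e / (t + 1))) with e by (field; lra). lra. }
  assert (Hs := proj1 Pl_ok t Ht).
  unfold l1norm. rewrite (sum_eq _ (fun i => Series (Pl t i))).
  2: { intros i Hi. unfold nrm. apply Series_ext. intro j. apply Rabs_right. apply Rle_ge, Pl_nonneg; auto. }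
  destruct (ser_sum (Pl t) M) as [Ex Eq].
  { intros i Hi. apply exs_abs. apply Hs; auto. }
  rewrite <- Eq. assert (L1 := ser_lim _ Ex).
  assert (L2 : is_lim_seq (sum_f_R0 (fun j => sum_f_R0 (fun i => Pl t i j) M)) 1).
  { apply (is_lim_seq_ext Ssum). intro J. unfold Ssum. rewrite sum_swap. reflexivity. exact Hlim. }
  apply is_lim_seq_unique in L1. apply is_lim_seq_unique in L2. rewrite L1 in L2. injection L2. auto.
Qed.

Lemma main_sec : exists P : R -> rfamily,
    is_solution M x0 y0 lam f mu P /\
    (forall Q : R -> rfamily, is_solution M x0 y0 lam f mu Q ->
       forall t i j, 0 <= t -> (i <= M)%nat -> Q t i j = P t i j) /\
    (forall t i j, 0 <= t -> (i <= M)%nat -> 0 <= P t i j) /\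
    (forall t, 0 <= t -> l1norm M (P t) = 1).
Proof.
  exists Pl. split; [|split; [|split]].
  - split; [|split].
    + intros t Ht. apply Pl_ok; auto.
    + intros t Ht. apply within_of. intros e He. destruct (proj2 Pl_ok t e He) as [d [Hd Hd']]. exists d. split; auto.
      intros s Hs Hst. specialize (Hd' s Hst). rewrite !Rmax_right in Hd' by lra.
      rewrite Rabs_right. exact Hd'. apply Rle_ge, l1_ge0. apply summable_minus; apply Pl_ok; auto.
    + intros t Ht i j Hi. exact (Pl_eq t i j Ht Hi).
  - intros Q [HQ1 [HQ2 HQ3]] t i j Ht Hi. apply uniq; auto.
    split. exact HQ1. intros t0 e He.
    destruct (of_within _ (Rmax 0 t0) (HQ2 (Rmax 0 t0) (Rmax_l 0 t0)) e He) as [d [Hd Hd']].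
    exists d. split; auto. intros s Hs.
    assert (Hb : Rabs (Rmax 0 s - Rmax 0 t0) <= Rabs (s - t0))
      by (unfold Rmax; repeat destruct Rle_dec; unfold Rabs; repeat destruct Rcase_abs; lra).
    assert (X := Hd' (Rmax 0 s) (Rmax_l 0 s) ltac:(lra)).
    rewrite Rabs_right in X. exact X. apply Rle_ge, l1_ge0, summable_minus; apply HQ1; apply Rmax_l.
    intros; apply HQ3; auto.
  - intros; apply Pl_nonneg; auto.
  - intros; apply Pl_mass; auto.
Qed.

End Est.



Theorem proposition3 (M : nat) (x0 y0 : nat) (lam : R -> nat -> R) (f : R -> R)
  (mu : nat -> nat -> nat -> R) :
  (1 <= M)%nat ->
  (x0 <= M)%nat ->
  (* lambda : R_+ x L_M -> R_+ *)
  (forall t x, 0 <= t -> (x <= M)%nat -> 0 <= lam t x) ->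
  (* t |-> lambda(t,x) is cadlag on R_+ *)
  (forall x, (x <= M)%nat -> forall t, 0 <= t ->
     filterlim (fun s => lam s x) (at_right t) (locally (lam t x))) ->
  (forall x, (x <= M)%nat -> forall t, 0 < t ->
     exists l, filterlim (fun s => lam s x) (at_left t) (locally l)) ->
  (* lambda(t,M) = 0 *)
  (forall t, 0 <= t -> lam t M = 0) ->
  (* lambda bounded on [0,T] x L_M *)
  (forall T, 0 < T -> exists B, forall t x, 0 <= t <= T -> (x <= M)%nat ->
     Rabs (lam t x) <= B) ->
  (* f continuous with 0 < f_low <= f <= f_up < oo *)
  (forall y, continuous f y) ->
  (exists flo fup, 0 < flo /\ forall y, flo <= f y <= fup) ->
  (* the generators mu^k *)
  (forall k i j, (k <= M)%nat -> i <> j -> 0 <= mu k i j) ->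
  (forall k i, (k <= M)%nat -> mu k i i <= 0) ->
  (forall k i, (k <= M)%nat -> is_series (fun j => mu k i j) 0) ->
  (forall k, (k <= M)%nat -> exists B, forall i, Rabs (mu k i i) <= B) ->
  exists P : R -> rfamily,
    is_solution M x0 y0 lam f mu P /\
    (forall Q : R -> rfamily, is_solution M x0 y0 lam f mu Q ->
       forall t i j, 0 <= t -> (i <= M)%nat -> Q t i j = P t i j) /\
    (forall t i j, 0 <= t -> (i <= M)%nat -> 0 <= P t i j) /\
    (forall t, 0 <= t -> l1norm M (P t) = 1).
Proof.
  intros HM Hx0 Hlam0 Hrc Hll _ HlamB _ [flo [fup [Hflo Hf]]] Hoff Hdiag Hrow HBmu.
  destruct (unif_bound M mu HBmu) as [Bmu HBmu'].
  apply (main_sec M lam f mu flo fup Bmu Hflo Hf Hoff Hdiag Hrow HBmu' x0 y0 Hx0 Hlam0); auto.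
  - intros x Hx t Ht. apply rc_of. apply Hrc; auto.
  - intros x Hx t Ht. destruct (Hll x Hx t Ht) as [l Hl]. exists l. apply ll_of. exact Hl.
Qed.
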